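(* Let $k\ge0$ be an integer and $a,b,c\in\mathbb{C}$ with $c\notin\{0,-1,-2,\dots\}$, $1+2c-b+k\notin\{0,-1,-2,\dots\}$, and $\mathrm{Re}(2c-a-2b+k)>0$. Then $${}_3F_2\!\left(\left.\begin{array}{c}a,\ b,\ c+1\\ 1+2c-b+k,\ c\end{array}\right|1\right)=\frac{\big[(a-2c)(b-c)+kc\big]\,\Gamma(2c-b+k+1)\,\Gamma(2c-a-2b+k)}{c\,\Gamma(2c-2b+k+1)\,\Gamma(2c-a-b+k+1)},$$ where $1/\Gamma$ is interpreted as the entire function.
   Context: ${}_3F_2(a_1,a_2,a_3;b_1,b_2;1)=\sum_{m\ge0}\frac{(a_1)_m(a_2)_m(a_3)_m}{m!\,(b_1)_m(b_2)_m}$ with $(\alpha)_m=\Gamma(\alpha+m)/\Gamma(\alpha)$, absolutely convergent when $\mathrm{Re}(b_1+b_2-a_1-a_2-a_3)>0$. *)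

(* Defs.v *)
From Stdlib Require Import Reals ClassicalEpsilon Factorial.
Open Scope R_scope.

Definition Cplx : Type := (R * R)%type.
Definition Re (z : Cplx) : R := fst z.
Definition Im (z : Cplx) : R := snd z.
Definition RtoC (x : R) : Cplx := (x, 0).
Definition Cadd (z w : Cplx) : Cplx := (fst z + fst w, snd z + snd w).
Definition Copp (z : Cplx) : Cplx := (- fst z, - snd z).
Definition Csub (z w : Cplx) : Cplx := Cadd z (Copp w).
Definition Cmul (z w : Cplx) : Cplx :=
  (fst z * fst w - snd z * snd w, fst z * snd w + snd z * fst w).
Definition Cinv (z : Cplx) : Cplx :=
  (fst z / (fst z ^ 2 + snd z ^ 2), - snd z / (fst z ^ 2 + snd z ^ 2)).
Definition Cdiv (z w : Cplx) : Cplx := Cmul z (Cinv w).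
Definition Cexp (z : Cplx) : Cplx := (exp (fst z) * cos (snd z), exp (fst z) * sin (snd z)).
Definition Rcpow (x : R) (z : Cplx) : Cplx := Cexp (Cmul z (RtoC (ln x))).

Definition Ccv (u : nat -> Cplx) (l : Cplx) : Prop :=
  Un_cv (fun n => fst (u n)) (fst l) /\ Un_cv (fun n => snd (u n)) (snd l).
Fixpoint Csum (f : nat -> Cplx) (N : nat) : Cplx :=
  match N with
  | O => f O
  | S n => Cadd (Csum f n) (f (S n))
  end.
Definition Cseries_cv (f : nat -> Cplx) (l : Cplx) : Prop := Ccv (Csum f) l.

(* limit of a complex sequence (arbitrary value if it diverges) *)
Definition Clim (u : nat -> Cplx) : Cplx :=
  epsilon (inhabits (0, 0)) (fun l => Ccv u l).

Fixpoint poch (a : Cplx) (m : nat) : Cplx :=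
  match m with
  | O => RtoC 1
  | S n => Cmul (poch a n) (Cadd a (RtoC (INR n)))
  end.

(* 1/Gamma, the entire function, via Gauss' limit formula:
   1/Gamma(z) = lim_n z(z+1)...(z+n) / (n! n^z). *)
Definition rGamma (z : Cplx) : Cplx :=
  Clim (fun n => Cdiv (poch z (S (S n)))
                      (Cmul (RtoC (INR (fact (S n)))) (Rcpow (INR (S n)) z))).
(* Gamma(z) := 1 / (1/Gamma(z)) (meaningful away from the poles) *)
Definition Gamma (z : Cplx) : Cplx := Cinv (rGamma z).

Definition F32_term (a1 a2 a3 b1 b2 : Cplx) (m : nat) : Cplx :=
  Cdiv (Cmul (Cmul (poch a1 m) (poch a2 m)) (poch a3 m))
       (Cmul (Cmul (RtoC (INR (fact m))) (poch b1 m)) (poch b2 m)).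

Definition not_nonpos_int (z : Cplx) : Prop := forall n : nat, z <> RtoC (- INR n).

(* Main.v *)
From Stdlib Require Import Reals Lra Lia ClassicalEpsilon Factorial.
From Coquelicot Require Import Coquelicot.
Require Import Defs.
Open Scope R_scope.

Lemma Cadd_C x y : Cadd x y = Cplus x y. Proof. reflexivity. Qed.
Lemma Cmul_C x y : Cmul x y = Cmult x y. Proof. reflexivity. Qed.
Lemma Csub_C x y : Csub x y = Cminus x y. Proof. reflexivity. Qed.
Lemma Cinv_C x : Defs.Cinv x = Complex.Cinv x. Proof. reflexivity. Qed.
Lemma Cdiv_C x y : Defs.Cdiv x y = Complex.Cdiv x y. Proof. reflexivity. Qed.
Lemma RtoC_C x : Defs.RtoC x = Complex.RtoC x. Proof. reflexivity. Qed.

Ltac cnorm := change Defs.Cdiv with Complex.Cdiv in *; change Defs.Cadd with Cplus in *;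
  change Defs.Cmul with Cmult in *; change Defs.Csub with Cminus in *; change Defs.Cinv with Complex.Cinv in *;
  change Defs.Copp with Complex.Copp in *; change Defs.RtoC with Complex.RtoC in *; try change Cplx with C in *.

Lemma poch_S a n : poch a (S n) = (poch a n * (a + INR n))%C.
Proof. reflexivity. Qed.

Lemma nn_ne (a : C) n : not_nonpos_int a -> (a + INR n)%C <> 0%C.
Proof.
  intros H E; apply (H n). rewrite RtoC_C.
  apply (f_equal (fun z => (z - INR n)%C)) in E.
  replace (a + INR n - INR n)%C with a in E by ring. rewrite E.
  unfold Cminus, Cplus, Complex.Copp, Complex.RtoC; simpl. f_equal; lra.
Qed.

Lemma poch_ne (a : C) n : not_nonpos_int a -> poch a n <> RtoC 0.
Proof.
  intro H; induction n; simpl.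
  - intro E. injection E; lra.
  - change (poch a n * (a + INR n) <> RtoC 0)%C.
    apply Cmult_neq_0; [exact IHn | exact (nn_ne a n H)].
Qed.
Lemma Ccv_intro (u : nat -> C) (l : C) :
  is_lim_seq (fun n => fst (u n)) (fst l) -> is_lim_seq (fun n => snd (u n)) (snd l) -> Ccv u l.
Proof. intros H1 H2; split; apply is_lim_seq_Reals; assumption. Qed.

Lemma Ccv_fst u l : Ccv u l -> is_lim_seq (fun n => fst (u n)) (fst l).
Proof. intros [H _]; apply is_lim_seq_Reals; exact H. Qed.
Lemma Ccv_snd u l : Ccv u l -> is_lim_seq (fun n => snd (u n)) (snd l).
Proof. intros [_ H]; apply is_lim_seq_Reals; exact H. Qed.

Lemma Ccv_const (l : C) : Ccv (fun _ => l) l.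
Proof. apply Ccv_intro; apply is_lim_seq_const. Qed.

Lemma Ccv_plus (u v : nat -> C) l1 l2 : Ccv u l1 -> Ccv v l2 ->
  Ccv (fun n => Cplus (u n) (v n)) (Cplus l1 l2).
Proof.
  intros H1 H2; apply Ccv_intro; simpl;
  apply is_lim_seq_plus'; auto using Ccv_fst, Ccv_snd.
Qed.

Lemma Ccv_mult (u v : nat -> C) l1 l2 : Ccv u l1 -> Ccv v l2 ->
  Ccv (fun n => Cmult (u n) (v n)) (Cmult l1 l2).
Proof.
  intros H1 H2; apply Ccv_intro; simpl.
  - apply is_lim_seq_minus'; apply is_lim_seq_mult'; auto using Ccv_fst, Ccv_snd.
  - apply is_lim_seq_plus'; apply is_lim_seq_mult'; auto using Ccv_fst, Ccv_snd.
Qed.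

Lemma Ccv_ext (u v : nat -> C) l : (forall n, u n = v n) -> Ccv u l -> Ccv v l.
Proof.
  intros E H; apply Ccv_intro; [apply (is_lim_seq_ext (fun n => fst (u n)))|
   apply (is_lim_seq_ext (fun n => snd (u n)))]; try (intro n; rewrite E; reflexivity);
  auto using Ccv_fst, Ccv_snd.
Qed.

Lemma Ccv_shift (u : nat -> C) l : Ccv u l <-> Ccv (fun n => u (S n)) l.
Proof.
  split; intro H; apply Ccv_intro.
  - apply (is_lim_seq_incr_1 (fun n => fst (u n))); auto using Ccv_fst.
  - apply (is_lim_seq_incr_1 (fun n => snd (u n))); auto using Ccv_snd.
  - apply (is_lim_seq_incr_1 (fun n => fst (u n))); apply (Ccv_fst _ _ H).
  - apply (is_lim_seq_incr_1 (fun n => snd (u n))); apply (Ccv_snd _ _ H).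
Qed.

Lemma Ccv_unique u l1 l2 : Ccv u l1 -> Ccv u l2 -> l1 = l2.
Proof.
  intros H1 H2.
  apply Ccv_fst in H1 as F1; apply Ccv_fst in H2 as F2;
  apply Ccv_snd in H1 as S1; apply Ccv_snd in H2 as S2.
  apply is_lim_seq_unique in F1, F2, S1, S2.
  rewrite F1 in F2; rewrite S1 in S2. injection F2; injection S2; intros.
  destruct l1, l2; simpl in *; subst; reflexivity.
Qed.

Lemma Clim_eq u l : Ccv u l -> Clim u = l.
Proof.
  intro H. unfold Clim.
  apply (Ccv_unique u); [|exact H].
  apply epsilon_spec. exists l; exact H.
Qed.

Lemma Cmod_le_sum (x : C) : Cmod x <= Rabs (fst x) + Rabs (snd x).
Proof.
  unfold Cmod. rewrite <- (sqrt_Rsqr (Rabs (fst x) + Rabs (snd x))) by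
    (generalize (Rabs_pos (fst x)) (Rabs_pos (snd x)); lra).
  apply sqrt_le_1_alt. unfold Rsqr.
  assert (E1 : fst x ^ 2 = Rabs (fst x) * Rabs (fst x)) by
    (rewrite <- Rabs_mult; rewrite Rabs_right; [ring| nra]).
  assert (E2 : snd x ^ 2 = Rabs (snd x) * Rabs (snd x)) by
    (rewrite <- Rabs_mult; rewrite Rabs_right; [ring| nra]).
  rewrite E1, E2.
  generalize (Rabs_pos (fst x)) (Rabs_pos (snd x)); nra.
Qed.

Lemma fst_le_Cmod (x : C) : Rabs (fst x) <= Cmod x.
Proof. generalize (Rmax_Cmod x); generalize (Rmax_l (Rabs (fst x)) (Rabs (snd x))); lra. Qed.
Lemma snd_le_Cmod (x : C) : Rabs (snd x) <= Cmod x.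
Proof. generalize (Rmax_Cmod x); generalize (Rmax_r (Rabs (fst x)) (Rabs (snd x))); lra. Qed.

Lemma lim0_squeeze (x e : nat -> R) : (forall n, Rabs (x n) <= e n) -> is_lim_seq e 0 ->
  is_lim_seq x 0.
Proof.
  intros H He. apply is_lim_seq_abs_0.
  apply (is_lim_seq_le_le (fun _ => 0) _ e); [|apply is_lim_seq_const|exact He].
  intro n; split; [apply Rabs_pos|apply H].
Qed.

Lemma lim_of_diff (x : nat -> R) l : is_lim_seq (fun n => x n - l) 0 -> is_lim_seq x l.
Proof.
  intro H. assert (K := is_lim_seq_plus' _ _ 0 l H (is_lim_seq_const l)).
  rewrite Rplus_0_l in K. eapply is_lim_seq_ext; [|exact K]. intro; simpl; ring.
Qed.

Lemma Ccv_bound (u : nat -> C) l e : (forall n, Cmod (Cminus (u n) l) <= e n) -> is_lim_seq e 0 ->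
  Ccv u l.
Proof.
  intros H He. apply Ccv_intro; apply lim_of_diff; apply (lim0_squeeze _ e); auto; intro n.
  - apply Rle_trans with (2 := H n). apply (fst_le_Cmod (Cminus (u n) l)).
  - apply Rle_trans with (2 := H n). apply (snd_le_Cmod (Cminus (u n) l)).
Qed.

Lemma Cmod_diff_le (x y : C) : Rabs (Cmod x - Cmod y) <= Cmod (Cminus x y).
Proof.
  assert (A : Cmod x <= Cmod (Cminus x y) + Cmod y).
  { replace x with (Cplus (Cminus x y) y) at 1 by ring. apply Cmod_triangle. }
  assert (B : Cmod y <= Cmod (Cminus x y) + Cmod x).
  { replace y with (Cplus (Complex.Copp (Cminus x y)) x) at 1 by ring.
    rewrite <- (Cmod_opp (Cminus x y)). apply Cmod_triangle. }
  apply Rabs_le; lra.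
Qed.

Lemma Ccv_Cmod u l : Ccv u l -> is_lim_seq (fun n => Cmod (u n)) (Cmod l).
Proof.
  intro H. apply lim_of_diff.
  apply (lim0_squeeze _ (fun n => Rabs (fst (u n) - fst l) + Rabs (snd (u n) - snd l))).
  - intro n. eapply Rle_trans; [apply Cmod_diff_le|]. apply (Cmod_le_sum (Cminus (u n) l)).
  - replace 0 with (0 + 0) by ring.
    apply is_lim_seq_plus'; apply (proj1 (is_lim_seq_abs_0 _)).
    + replace 0 with (fst l - fst l) by ring.
      apply is_lim_seq_minus'; [apply (Ccv_fst _ _ H)|apply is_lim_seq_const].
    + replace 0 with (snd l - snd l) by ring.
      apply is_lim_seq_minus'; [apply (Ccv_snd _ _ H)|apply is_lim_seq_const].
Qed.

Lemma Ccv_Cmod_ge u l m N : Ccv u l -> (forall n, (N <= n)%nat -> m <= Cmod (u n)) -> m <= Cmod l.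
Proof.
  intros H Hm. apply Ccv_Cmod in H. apply (is_lim_seq_incr_n _ N) in H.
  assert (B := is_lim_seq_le (fun _ => m) (fun n => Cmod (u (n + N)%nat)) m (Cmod l)).
  apply B; [intro n; apply Hm; lia|apply is_lim_seq_const|exact H].
Qed.

Lemma Ccv_Cmod_le u l m N : Ccv u l -> (forall n, (N <= n)%nat -> Cmod (u n) <= m) -> Cmod l <= m.
Proof.
  intros H Hm. apply Ccv_Cmod in H. apply (is_lim_seq_incr_n _ N) in H.
  assert (B := is_lim_seq_le (fun n => Cmod (u (n + N)%nat)) (fun _ => m) (Cmod l) m).
  apply B; [intro n; apply Hm; lia|exact H|apply is_lim_seq_const].
Qed.

Lemma Csum_fst f N : fst (Csum f N) = sum_n (fun k => fst (f k)) N.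
Proof. induction N; simpl. - rewrite sum_O; reflexivity. - rewrite sum_Sn, IHN; reflexivity. Qed.
Lemma Csum_snd f N : snd (Csum f N) = sum_n (fun k => snd (f k)) N.
Proof. induction N; simpl. - rewrite sum_O; reflexivity. - rewrite sum_Sn, IHN; reflexivity. Qed.

Lemma sum_n_nonneg (g : nat -> R) N : (forall n, 0 <= g n) -> 0 <= sum_n g N.
Proof. intro H; induction N; [rewrite sum_O; apply H| rewrite sum_Sn; generalize (H (S N)); simpl; change plus with Rplus; simpl; lra]. Qed.

Lemma sum_n_le_Series (g : nat -> R) N : (forall n, 0 <= g n) -> ex_series g -> sum_n g N <= Series g.
Proof.
  intros H E. apply Series_correct in E. assert (L : is_lim_seq (sum_n g) (Series g)) by exact E.
  apply (is_lim_seq_incr_n _ N) in L.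
  assert (B := is_lim_seq_le (fun _ => sum_n g N) (fun n => sum_n g (n + N)) (sum_n g N) (Series g)).
  apply B; [|apply is_lim_seq_const|exact L].
  intro n; induction n; [simpl; lra|]. simpl plus. eapply Rle_trans; [exact IHn|].
  change (S n + N)%nat with (S (n + N)). rewrite sum_Sn. change plus with Rplus. simpl. generalize (H (S (n+N))); lra.
Qed.

Lemma sum_n_le (f g : nat -> R) N : (forall n, f n <= g n) -> sum_n f N <= sum_n g N.
Proof. intro H; induction N; [rewrite !sum_O; apply H| rewrite !sum_Sn; generalize (H (S N)); simpl; change plus with Rplus; simpl; lra]. Qed.

Lemma Cmod_Csum_le f N : Cmod (Csum f N) <= sum_n (fun n => Cmod (f n)) N.
Proof.
  induction N; simpl. - rewrite sum_O; lra.
  - rewrite sum_Sn. change plus with Rplus; simpl.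
    eapply Rle_trans; [apply (Cmod_triangle (Csum f N) (f (S N)))|]. lra.
Qed.

Lemma Cseries_abs (f : nat -> C) : ex_series (fun n => Cmod (f n)) ->
  Cseries_cv f (Series (fun n => fst (f n)), Series (fun n => snd (f n))).
Proof.
  intro H. assert (E1 : ex_series (fun n => fst (f n))).
  { apply ex_series_Rabs. apply (@ex_series_le R_AbsRing R_CompleteNormedModule _ (fun n => Cmod (f n))); [|exact H].
    intro n; unfold norm; simpl; unfold abs; simpl. rewrite Rabs_Rabsolu. apply fst_le_Cmod. }
  assert (E2 : ex_series (fun n => snd (f n))).
  { apply ex_series_Rabs. apply (@ex_series_le R_AbsRing R_CompleteNormedModule _ (fun n => Cmod (f n))); [|exact H].
    intro n; unfold norm; simpl; unfold abs; simpl. rewrite Rabs_Rabsolu. apply snd_le_Cmod. }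
  apply Ccv_intro; simpl.
  - eapply is_lim_seq_ext; [intro n; symmetry; apply Csum_fst|]. apply Series_correct in E1; exact E1.
  - eapply is_lim_seq_ext; [intro n; symmetry; apply Csum_snd|]. apply Series_correct in E2; exact E2.
Qed.

Lemma Cseries_ex (f : nat -> C) : ex_series (fun n => Cmod (f n)) -> exists l, Cseries_cv f l.
Proof. intro H; eexists; apply Cseries_abs, H. Qed.

Lemma Cseries_Cmod_le (f : nat -> C) l (g : nat -> R) : Cseries_cv f l -> (forall n, Cmod (f n) <= g n) ->
  ex_series g -> Cmod l <= Series g.
Proof.
  intros H Hg E. apply (Ccv_Cmod_le _ _ _ 0 H). intros n _.
  eapply Rle_trans; [apply Cmod_Csum_le|]. eapply Rle_trans; [apply (sum_n_le _ g), Hg|].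
  apply sum_n_le_Series; [|exact E]. intro m; eapply Rle_trans; [apply Cmod_ge_0|apply Hg].
Qed.

Lemma Ccv_telescope (u : nat -> C) : ex_series (fun n => Cmod (Cminus (u (S n)) (u n))) ->
  exists l, Ccv u l.
Proof.
  intro H. destruct (Cseries_ex _ H) as [l Hl]. exists (Cplus (u 0%nat) l).
  apply Ccv_shift. apply (Ccv_ext (fun n => Cplus (u 0%nat) (Csum (fun n => Cminus (u (S n)) (u n)) n))).
  - intro n; induction n; simpl Csum.
    + change (u 0%nat + (u 1%nat - u 0%nat) = u 1%nat)%C. ring.
    + rewrite <- Cadd_C. change (Cplus (u 0%nat) (Cplus (Csum (fun n0 : nat => Cminus (u (S n0)) (u n0)) n) (Cminus (u (S (S n))) (u (S n)))) = u (S (S n))).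
      rewrite <- IHn. ring.
  - apply Ccv_plus; [apply Ccv_const|exact Hl].
Qed.

Lemma Csum_plus f g N : Csum (fun n => Cplus (f n) (g n)) N = Cplus (Csum f N) (Csum g N).
Proof. induction N; simpl; [reflexivity|]. rewrite IHN. change (Cplus (Cplus (Csum f N) (Csum g N)) (Cplus (f (S N)) (g (S N))) =
 Cplus (Cplus (Csum f N) (f (S N))) (Cplus (Csum g N) (g (S N)))). ring. Qed.

Lemma Csum_scal (c : C) f N : Csum (fun n => Cmult c (f n)) N = Cmult c (Csum f N).
Proof. induction N; simpl; [reflexivity|]. rewrite IHN. change (Cplus (Cmult c (Csum f N)) (Cmult c (f (S N))) =
 Cmult c (Cplus (Csum f N) (f (S N)))). ring. Qed.

Lemma Csum_shift f N : Csum f (S N) = Cplus (f 0%nat) (Csum (fun n => f (S n)) N).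
Proof. induction N; simpl; [reflexivity|]. simpl in IHN. rewrite IHN.
 change (Cplus (Cplus (f 0%nat) (Csum (fun n => f (S n)) N)) (f (S (S N))) =
   Cplus (f 0%nat) (Cplus (Csum (fun n => f (S n)) N) (f (S (S N))))). ring. Qed.

Lemma Csum_ext f g N : (forall n, f n = g n) -> Csum f N = Csum g N.
Proof. intro H; induction N; simpl; rewrite ?IHN, ?H; reflexivity. Qed.

Lemma Cseries_plus f g l1 l2 : Cseries_cv f l1 -> Cseries_cv g l2 ->
  Cseries_cv (fun n => Cplus (f n) (g n)) (Cplus l1 l2).
Proof. intros H1 H2. unfold Cseries_cv. eapply Ccv_ext; [intro; symmetry; apply Csum_plus|]. apply Ccv_plus; auto. Qed.

Lemma Cseries_scal c f l : Cseries_cv f l -> Cseries_cv (fun n => Cmult c (f n)) (Cmult c l).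
Proof. intros H. unfold Cseries_cv. eapply Ccv_ext; [intro; symmetry; apply Csum_scal|]. apply Ccv_mult; auto using Ccv_const. Qed.

Lemma Cseries_shift f l : Cseries_cv (fun n => f (S n)) l -> Cseries_cv f (Cplus (f 0%nat) l).
Proof.
  intros H. unfold Cseries_cv. apply Ccv_shift.
  eapply Ccv_ext; [intro; symmetry; apply Csum_shift|]. apply Ccv_plus; auto using Ccv_const.
Qed.

Lemma Cseries_ext f g l : (forall n, f n = g n) -> Cseries_cv f l -> Cseries_cv g l.
Proof. intros E H. unfold Cseries_cv. eapply Ccv_ext; [intro; apply Csum_ext, E|]. exact H. Qed.

Lemma abs_le_inv a b : Rabs a <= b -> - b <= a <= b.
Proof. unfold Rabs; destruct (Rcase_abs a); lra. Qed.

Lemma sin_approx1 a : sin_approx a 1 = a - a^3/6.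
Proof. unfold sin_approx, sin_term; simpl; field. Qed.
Lemma cos_approx1 a : cos_approx a 1 = 1 - a^2/2.
Proof. unfold cos_approx, cos_term; simpl; field. Qed.

Lemma sin_near_pos v : 0 <= v <= 1 -> v - v^3/6 <= sin v <= v.
Proof.
  intro H. destruct (pre_sin_bound v 0 ltac:(lra) ltac:(lra)) as [A _].
  rewrite sin_approx1 in A. split; [exact A|].
  destruct (Req_dec v 0) as [->|Hv]; [rewrite sin_0; lra|]. left; apply sin_lt_x; lra.
Qed.

Lemma sin_near v : Rabs v <= 1 -> Rabs (sin v - v) <= v^2 /\ Rabs (sin v) <= Rabs v.
Proof.
  intro H. destruct (Rle_dec 0 v) as [Hp|Hn].
  - rewrite Rabs_right in H by lra. destruct (sin_near_pos v ltac:(lra)).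
    split; [apply Rabs_le; nra|]. rewrite (Rabs_right v) by lra. apply Rabs_le; nra.
  - rewrite Rabs_left in H by lra. destruct (sin_near_pos (-v) ltac:(lra)) as [A B].
    rewrite sin_neg in A, B.
    split; [apply Rabs_le; nra|]. rewrite (Rabs_left v) by lra. apply Rabs_le; nra.
Qed.

Lemma cos_near v : Rabs v <= 1 -> Rabs (cos v - 1) <= v^2/2.
Proof.
  intro H. apply abs_le_inv in H.
  destruct (pre_cos_bound v 0 ltac:(lra) ltac:(lra)) as [A _]. rewrite cos_approx1 in A.
  generalize (COS_bound v); intro; apply Rabs_le; nra.
Qed.

Lemma exp_near u : Rabs u <= /2 -> Rabs (exp u - 1 - u) <= 2 * u^2.
Proof.
  intro H. apply abs_le_inv in H. generalize (exp_ineq1_le u) (exp_ineq1_le (-u)); intros A B.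
  assert (P : exp u * exp (-u) = 1) by (rewrite <- exp_plus; replace (u + - u) with 0 by ring; apply exp_0).
  assert (Q : exp u * (1 - u) <= 1) by (rewrite <- P; apply Rmult_le_compat_l; [left; apply exp_pos| lra]).
  apply Rabs_le; split; [nra|].
  destruct (Rle_dec (exp u - 1 - u) 0); [nra|].
  assert ((exp u - 1 - u) * (1 - u) <= u^2) by nra. nra.
Qed.

Lemma exp_near1 u : Rabs u <= /2 -> Rabs (exp u - 1) <= 2 * Rabs u.
Proof.
  intro H. generalize (exp_near u H); intro A.
  replace (exp u - 1) with ((exp u - 1 - u) + u) by ring.
  eapply Rle_trans; [apply Rabs_triang|].
  assert (u^2 = Rabs u * Rabs u) by (rewrite <- Rabs_mult; rewrite Rabs_right; [ring|nra]).
  generalize (Rabs_pos u); nra.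
Qed.

Lemma Cexp_near (w : C) : Rabs (fst w) <= /2 -> Rabs (snd w) <= /2 ->
  Cmod (Cminus (Cminus (Cexp w) (RtoC 1)) w) <= 4 * (fst w ^ 2 + snd w ^ 2).
Proof.
  destruct w as [u v]; simpl; intros Hu Hv.
  eapply Rle_trans; [apply Cmod_le_sum|]. simpl.
  replace (exp u * cos v + - (1) + - u) with ((exp u - 1 - u) * cos v + (1 + u) * (cos v - 1)) by ring.
  replace (exp u * sin v + - 0 + - v) with ((exp u - 1) * sin v + (sin v - v)) by ring.
  destruct (sin_near v ltac:(lra)) as [S1 S2]. generalize (cos_near v ltac:(lra)); intro C1.
  generalize (exp_near u Hu) (exp_near1 u Hu); intros E1 E2.
  generalize (COS_bound v); intro CB.
  assert (A1 : Rabs ((exp u - 1 - u) * cos v) <= 2 * u^2).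
  { rewrite Rabs_mult. assert (Rabs (cos v) <= 1) by (apply Rabs_le; lra).
    generalize (Rabs_pos (exp u - 1 - u)) (Rabs_pos (cos v)); nra. }
  assert (A2 : Rabs ((1 + u) * (cos v - 1)) <= 3/2 * (v^2/2)).
  { rewrite Rabs_mult. assert (Rabs (1 + u) <= 3/2) by (apply abs_le_inv in Hu; apply Rabs_le; lra).
    generalize (Rabs_pos (1 + u)) (Rabs_pos (cos v - 1)); nra. }
  assert (A3 : Rabs ((exp u - 1) * sin v) <= 2 * Rabs u * Rabs v).
  { rewrite Rabs_mult. generalize (Rabs_pos (exp u - 1)) (Rabs_pos (sin v)) (Rabs_pos u); nra. }
  assert (u^2 = Rabs u * Rabs u) by (rewrite <- Rabs_mult; rewrite Rabs_right; [ring|nra]).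
  assert (v^2 = Rabs v * Rabs v) by (rewrite <- Rabs_mult; rewrite Rabs_right; [ring|nra]).
  generalize (Rabs_triang ((exp u - 1 - u) * cos v) ((1 + u) * (cos v - 1)))
             (Rabs_triang ((exp u - 1) * sin v) (sin v - v)).
  assert (2 * Rabs u * Rabs v <= u^2 + v^2) by (generalize (pow2_ge_0 (Rabs u - Rabs v)); nra).
  intros T1 T2. generalize (pow2_ge_0 u) (pow2_ge_0 v). lra.
Qed.

Lemma Cexp_add (p q : C) : Cexp (Cplus p q) = Cmult (Cexp p) (Cexp q).
Proof.
  destruct p as [p1 p2], q as [q1 q2]; unfold Cexp, Cplus, Cmult; simpl.
  rewrite exp_plus, cos_plus, sin_plus. f_equal; ring.
Qed.

Lemma Cmod_Cexp (w : C) : Cmod (Cexp w) = exp (fst w).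
Proof.
  destruct w as [u v]; unfold Cmod, Cexp; simpl.
  replace (exp u * cos v * (exp u * cos v * 1) + exp u * sin v * (exp u * sin v * 1))
    with (exp u * exp u * (sin v * sin v + cos v * cos v)) by ring.
  generalize (sin2_cos2 v); unfold Rsqr; intro E; rewrite E, Rmult_1_r.
  apply sqrt_square. left; apply exp_pos.
Qed.

Lemma Cexp_ne0 (w : C) : Cexp w <> RtoC 0.
Proof.
  intro E. assert (H := Cmod_Cexp w). rewrite E in H. change (Cmod (Complex.RtoC 0) = exp (fst w)) in H.
  rewrite Cmod_0 in H. generalize (exp_pos (fst w)); lra.
Qed.

Lemma Rcpow_mul x y z : 0 < x -> 0 < y -> Rcpow (x * y) z = Cmult (Rcpow x z) (Rcpow y z).
Proof.
  intros Hx Hy. unfold Rcpow. rewrite ln_mult by assumption. rewrite <- Cexp_add. f_equal.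
  destruct z; unfold Cmul, Cplus, RtoC; simpl; f_equal; ring.
Qed.

Lemma Rcpow_add x z w : Rcpow x (Cplus z w) = Cmult (Rcpow x z) (Rcpow x w).
Proof.
  unfold Rcpow. rewrite <- Cexp_add. f_equal.
  destruct z, w; unfold Cmul, Cplus, RtoC; simpl; f_equal; ring.
Qed.

Lemma Cmod_Rcpow x z : Cmod (Rcpow x z) = exp (fst z * ln x).
Proof. unfold Rcpow. rewrite Cmod_Cexp. simpl. f_equal; ring. Qed.

Lemma Rcpow_ne0 x z : Rcpow x z <> RtoC 0.
Proof. apply Cexp_ne0. Qed.

Lemma Rcpow_one_exp x : 0 < x -> Rcpow x (RtoC 1) = RtoC x.
Proof.
  intro H. unfold Rcpow, Cexp, Cmul, RtoC; simpl.
  replace (1 * ln x - 0 * 0) with (ln x) by ring. replace (1 * 0 + 0 * ln x) with 0 by ring.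
  rewrite cos_0, sin_0, exp_ln by exact H. f_equal; ring.
Qed.

Lemma ex_series_tele (f : nat -> R) (L : R) : is_lim_seq f L -> ex_series (fun n => f n - f (S n)).
Proof.
  intro H. exists (f 0%nat - L).
  assert (E : forall n, sum_n (fun n => f n - f (S n)) n = f 0%nat - f (S n)).
  { induction n; [rewrite sum_O; reflexivity|]. rewrite sum_Sn, IHn. change plus with Rplus. simpl. ring. }
  assert (K : is_lim_seq (fun n => f 0%nat - f (S n)) (f 0%nat - L)).
  { apply is_lim_seq_minus'; [apply is_lim_seq_const|]. apply (is_lim_seq_incr_1 f); exact H. }
  apply (is_lim_seq_ext _ _ _ (fun n => eq_sym (E n))) in K. exact K.
Qed.

Lemma ex_series_R_le (a b : nat -> R) : (forall n, Rabs (a n) <= b n) -> ex_series b -> ex_series a.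
Proof. intros H E. apply (@ex_series_le R_AbsRing R_CompleteNormedModule a b); [|exact E]. intro n; apply H. Qed.

Lemma ex_series_R_scal (c : R) (a : nat -> R) : ex_series a -> ex_series (fun n => c * a n).
Proof. intro H; apply (@ex_series_scal_l R_AbsRing R_NormedModule c a H). Qed.

Lemma lim_inv_INR a : is_lim_seq (fun n => / INR (n + a)) 0.
Proof.
  replace (Finite 0) with (Rbar_inv p_infty) by reflexivity.
  apply is_lim_seq_inv; [|discriminate].
  apply (is_lim_seq_incr_n INR a). apply is_lim_seq_INR.
Qed.

Lemma INR_pos n : (1 <= n)%nat -> 0 < INR n.
Proof. intro; apply lt_0_INR; lia. Qed.

Lemma inv_tele x : 0 < x -> / x - / (x + 1) = / (x * (x + 1)).
Proof. intro; field; lra. Qed.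

Lemma ex_series_inv2 a : (1 <= a)%nat -> ex_series (fun n => / (INR (n + a) * INR (S (n + a)))).
Proof.
  intro Ha. apply (@ex_series_ext R_AbsRing R_NormedModule (fun n => / INR (n + a) - / INR (S n + a))).
  - intro n. simpl (S n + a)%nat. assert (0 < INR (n + a)) by (apply INR_pos; lia).
    rewrite S_INR. apply inv_tele; exact H.
  - apply (ex_series_tele (fun n => / INR (n + a)) 0). apply lim_inv_INR.
Qed.

Lemma lim_pow_neg (d : R) : 0 < d -> is_lim_seq (fun n => exp (- d * ln (INR n))) 0.
Proof.
  intro Hd.
  apply (is_lim_comp_seq exp _ m_infty 0); [apply is_lim_exp_m| exists 0%nat; discriminate|].
  apply (is_lim_seq_ext (fun n => ln (INR n) * (- d))); [intro; ring|].
  apply (is_lim_seq_mult _ _ p_infty (-d)).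
  - apply (is_lim_comp_seq ln _ p_infty p_infty); [apply is_lim_ln_p| exists 0%nat; discriminate|apply is_lim_seq_INR].
  - apply is_lim_seq_const.
  - apply is_Rbar_mult_p_infty_neg. simpl; lra.
Qed.

Lemma ln_le_sub1 y : 0 < y -> ln y <= y - 1.
Proof.
  intro Hy. rewrite <- (ln_exp (y - 1)). apply ln_le; [exact Hy|]. generalize (exp_ineq1_le (y - 1)); lra.
Qed.

Lemma ln_ge_1sub y : 0 < y -> 1 - / y <= ln y.
Proof.
  intro Hy. generalize (ln_le_sub1 (/ y) (Rinv_0_lt_compat y Hy)). rewrite ln_Rinv by exact Hy. lra.
Qed.

Lemma ex_series_p (d : R) (b : nat) : 0 < d -> (1 <= b)%nat ->
  ex_series (fun n => exp (- d * ln (INR (S (n + b)))) / INR (S (n + b))).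
Proof.
  intros Hd Hb.
  set (f := fun n => exp (- d * ln (INR (n + b)))).
  apply (ex_series_R_le _ (fun n => / d * (f n - f (S n)))).
  - intro n. unfold f. set (N := INR (n + b)).
    assert (HN : 1 <= N) by (unfold N; apply (le_INR 1); lia).
    replace (INR (S n + b)) with (N + 1) by (unfold N; simpl (S n + b)%nat; rewrite S_INR; reflexivity).
    replace (INR (S (n + b))) with (N + 1) by (unfold N; rewrite S_INR; reflexivity).
    rewrite Rabs_right by (apply Rle_ge, Rmult_le_pos; [left; apply exp_pos| left; apply Rinv_0_lt_compat; lra]).
    set (A := - d * ln N). set (B := - d * ln (N + 1)).
    assert (LN : / (N + 1) <= ln (N + 1) - ln N).
    { rewrite <- ln_div by lra. generalize (ln_ge_1sub ((N+1)/N) ltac:(apply Rdiv_lt_0_compat; lra)).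
      replace (1 - / ((N + 1) / N)) with (/ (N+1)) by (field; lra). lra. }
    assert (EX : exp B * (A - B) <= exp A - exp B).
    { replace (exp A) with (exp B * exp (A - B)) by (rewrite <- exp_plus; f_equal; ring).
      generalize (exp_ineq1_le (A - B)) (exp_pos B); nra. }
    assert (AB : d / (N + 1) <= A - B) by (unfold A, B; unfold Rdiv; nra).
    assert (exp B * (d / (N+1)) <= exp A - exp B) by (generalize (exp_pos B); nra).
    apply (Rmult_le_reg_l d); [exact Hd|]. rewrite <- Rmult_assoc, Rinv_r, Rmult_1_l by lra.
    unfold Rdiv in *. lra.
  - apply ex_series_R_scal. apply (ex_series_tele f 0).
    unfold f. apply (is_lim_seq_incr_n (fun n => exp (- d * ln (INR n))) b). apply lim_pow_neg, Hd.
Qed.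

Lemma exp_mono a b : a <= b -> exp a <= exp b.
Proof. intro H; destruct H as [H|H]; [left; apply exp_increasing, H| rewrite H; lra]. Qed.

Lemma Ccv_shift_n (u : nat -> C) N l : Ccv (fun n => u (n + N)%nat) l -> Ccv u l.
Proof.
  intro H; apply Ccv_intro.
  - apply (is_lim_seq_incr_n (fun n => fst (u n)) N). apply (Ccv_fst _ _ H).
  - apply (is_lim_seq_incr_n (fun n => snd (u n)) N). apply (Ccv_snd _ _ H).
Qed.

Lemma eN_eq K M : (1 <= M)%nat -> K / (INR M * INR (S M)) = K * (/ INR M - / INR (S M)).
Proof. intro H. rewrite S_INR. assert (0 < INR M) by (apply INR_pos; lia). field. lra. Qed.

Lemma inv_mono M N : (1 <= M)%nat -> (M <= N)%nat -> / INR N <= / INR M.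
Proof. intros. apply Rinv_le_contravar; [apply INR_pos; lia| apply le_INR; lia]. Qed.

Lemma prod_conv (x : nat -> C) (K : R) (N0 : nat) :
  (1 <= N0)%nat -> 0 <= K ->
  (forall N, (N0 <= N)%nat -> Cmod (Cminus (x (S N)) (x N)) <= Cmod (x N) * (K / (INR N * INR (S N)))) ->
  (exists l, Ccv x l) /\
  (forall N, (N0 <= N)%nat -> Cmod (x N) <= Cmod (x N0) * exp (K / INR N0)) /\
  (forall N, (N0 <= N)%nat -> Cmod (x N0) * (1 - K / INR N0) <= Cmod (x N)).
Proof.
  intros H1 HK H.
  assert (STEP1 : forall M, (N0 <= M)%nat -> Cmod (x (S M)) <= Cmod (x M) * (1 + K / (INR M * INR (S M)))).
  { intros M HM. generalize (H M HM). generalize (Cmod_diff_le (x (S M)) (x M)). intros A B.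
    apply abs_le_inv in A. lra. }
  assert (STEP2 : forall M, (N0 <= M)%nat -> Cmod (x M) * (1 - K / (INR M * INR (S M))) <= Cmod (x (S M))).
  { intros M HM. generalize (H M HM). generalize (Cmod_diff_le (x (S M)) (x M)). intros A B.
    apply abs_le_inv in A. lra. }
  assert (U : forall j, Cmod (x (j + N0)%nat) <= Cmod (x N0) * exp (K * (/ INR N0 - / INR (j + N0)))).
  { induction j.
    - simpl. replace (K * (/ INR N0 - / INR N0)) with 0 by ring. rewrite exp_0. lra.
    - set (M := (j + N0)%nat) in *. replace (S j + N0)%nat with (S M) by (unfold M; lia).
      assert (HM : (N0 <= M)%nat) by (unfold M; lia).
      eapply Rle_trans; [apply (STEP1 M HM)|].
      rewrite (eN_eq K M) by lia.
      set (e := K * (/ INR M - / INR (S M))).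
      assert (E1 : 1 + e <= exp e) by apply exp_ineq1_le.
      replace (K * (/ INR N0 - / INR (S M))) with (K * (/ INR N0 - / INR M) + e) by (unfold e; ring).
      rewrite exp_plus.
      assert (0 <= e).
      { unfold e. apply Rmult_le_pos; [exact HK|]. generalize (inv_mono M (S M) ltac:(lia) ltac:(lia)); lra. }
      generalize (Cmod_ge_0 (x M)) (Cmod_ge_0 (x N0)) (exp_pos e) (exp_pos (K * (/ INR N0 - / INR M))).
      intros. apply Rle_trans with (Cmod (x M) * exp e); [apply Rmult_le_compat_l; lra|].
      rewrite <- Rmult_assoc. apply Rmult_le_compat_r; lra. }
  assert (L : forall j, Cmod (x N0) * (1 - K * (/ INR N0 - / INR (j + N0))) <= Cmod (x (j + N0)%nat)).
  { induction j.
    - simpl. replace (K * (/ INR N0 - / INR N0)) with 0 by ring. lra.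
    - set (M := (j + N0)%nat) in *. replace (S j + N0)%nat with (S M) by (unfold M; lia).
      assert (HM : (N0 <= M)%nat) by (unfold M; lia).
      generalize (STEP2 M HM) (Cmod_ge_0 (x (S M))). rewrite (eN_eq K M) by lia. intros ST2 C0.
      set (e := K * (/ INR M - / INR (S M))). fold e in ST2.
      set (S0 := K * (/ INR N0 - / INR M)) in *.
      replace (K * (/ INR N0 - / INR (S M))) with (S0 + e) by (unfold e, S0; ring).
      assert (0 <= S0).
      { unfold S0. apply Rmult_le_pos; [exact HK|]. generalize (inv_mono N0 M ltac:(lia) ltac:(lia)); lra. }
      assert (0 <= e).
      { unfold e. apply Rmult_le_pos; [exact HK|]. generalize (inv_mono M (S M) ltac:(lia) ltac:(lia)); lra. }
      generalize (Cmod_ge_0 (x M)) (Cmod_ge_0 (x N0)). intros.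
      destruct (Rle_dec 0 (1 - e)).
      + eapply Rle_trans; [|exact ST2]. apply Rle_trans with (Cmod (x N0) * (1 - S0) * (1 - e)).
        { assert (0 <= Cmod (x N0) * (S0 * e)) by (apply Rmult_le_pos; [|apply Rmult_le_pos]; lra). nra. }
        apply Rmult_le_compat_r; lra.
      + nra. }
  split; [|split].
  - set (M0 := Cmod (x N0) * exp (K / INR N0)).
    assert (UB : forall N, (N0 <= N)%nat -> Cmod (x N) <= M0).
    { intros N HN. replace N with ((N - N0) + N0)%nat by lia. eapply Rle_trans; [apply U|].
      unfold M0. apply Rmult_le_compat_l; [apply Cmod_ge_0|]. apply exp_mono.
      unfold Rdiv. apply Rmult_le_compat_l; [exact HK|].
      generalize (inv_mono N0 (N - N0 + N0) ltac:(lia) ltac:(lia)). generalize (INR_pos (N - N0 + N0) ltac:(lia)).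
      intros; assert (0 < / INR (N - N0 + N0)) by (apply Rinv_0_lt_compat; lra). lra. }
    destruct (Ccv_telescope (fun n => x (n + N0)%nat)) as [l Hl].
    + apply (ex_series_R_le _ (fun n => M0 * K * / (INR (n + N0) * INR (S (n + N0))))).
      * intro n. rewrite Rabs_right by (apply Rle_ge, Cmod_ge_0). simpl (S n + N0)%nat.
        eapply Rle_trans; [apply (H (n + N0)%nat); lia|].
        assert (0 < INR (n + N0) * INR (S (n + N0))) by (apply Rmult_lt_0_compat; apply INR_pos; lia).
        unfold Rdiv. rewrite <- Rmult_assoc. apply Rmult_le_compat_r; [left; apply Rinv_0_lt_compat; lra|].
        apply Rmult_le_compat_r; [exact HK|]. apply UB; lia.
      * apply ex_series_R_scal. apply ex_series_inv2. lia.
    + exists l. apply (Ccv_shift_n _ N0). exact Hl.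
  - intros N HN. replace N with ((N - N0) + N0)%nat by lia. eapply Rle_trans; [apply U|].
    apply Rmult_le_compat_l; [apply Cmod_ge_0|]. apply exp_mono.
    unfold Rdiv. apply Rmult_le_compat_l; [exact HK|].
    generalize (INR_pos (N - N0 + N0) ltac:(lia)).
    intros; assert (0 < / INR (N - N0 + N0)) by (apply Rinv_0_lt_compat; lra). lra.
  - intros N HN. replace N with ((N - N0) + N0)%nat by lia. eapply Rle_trans; [|apply L].
    apply Rmult_le_compat_l; [apply Cmod_ge_0|].
    unfold Rdiv. generalize (INR_pos (N - N0 + N0) ltac:(lia)).
    intros; assert (0 < / INR (N - N0 + N0)) by (apply Rinv_0_lt_compat; lra). nra.
Qed.

Definition Gs (N : nat) (z : C) : C :=
  Cdiv (poch z (S N)) (Cmult (RtoC (INR (fact N))) (Rcpow (INR N) z)).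

Lemma rGamma_Gs z : rGamma z = Clim (fun n => Gs (S n) z).
Proof. reflexivity. Qed.

Definition rr (N : nat) (z : C) : C :=
  Cmult (Cplus (Complex.RtoC 1) (Cmult z (Complex.RtoC (/ INR (S N))))) (Rcpow (INR N / INR (S N)) z).

Lemma RtoC_ne0 x : x <> 0 -> Complex.RtoC x <> Complex.RtoC 0.
Proof. intros H E; injection E; tauto. Qed.

Lemma INR_fact_ne0 N : INR (fact N) <> 0.
Proof. apply not_0_INR, fact_neq_0. Qed.

Lemma Gs_step N z : (1 <= N)%nat -> Gs (S N) z = Cmult (Gs N z) (rr N z).
Proof.
  intro H. assert (HN : 0 < INR N) by (apply INR_pos; lia).
  assert (HS : 0 < INR (S N)) by (apply INR_pos; lia).
  unfold Gs, rr.
  assert (E : Rcpow (INR N) z = Cmult (Rcpow (INR N / INR (S N)) z) (Rcpow (INR (S N)) z)).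
  { rewrite <- Rcpow_mul by (try apply Rdiv_lt_0_compat; lra). f_equal; field; lra. }
  rewrite E.
  change (poch z (S (S N))) with (Cmult (poch z (S N)) (Cadd z (Defs.RtoC (INR (S N))))).
  rewrite fact_simpl, mult_INR.
  cnorm.
  rewrite RtoC_mult, RtoC_inv by lra.
  assert (A1 := Rcpow_ne0 (INR N / INR (S N)) z).
  assert (A2 := Rcpow_ne0 (INR (S N)) z).
  assert (A3 := RtoC_ne0 _ (INR_fact_ne0 N)).
  assert (A4 := RtoC_ne0 _ (Rgt_not_eq _ _ HS)).
  field. repeat split; assumption.
Qed.

Definition Kz (z : C) : R := Cmod z + Cmod z ^ 2 + 8 * (1 + Cmod z) * Cmod z ^ 2.

Lemma Cmod_sq (z : C) : Cmod z ^ 2 = fst z ^ 2 + snd z ^ 2.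
Proof. unfold Cmod. rewrite pow2_sqrt; [reflexivity|]. generalize (pow2_ge_0 (fst z)) (pow2_ge_0 (snd z)); lra. Qed.

Lemma Cmod_RtoC x : Cmod (Complex.RtoC x) = Rabs x.
Proof. apply Cmod_R. Qed.

Lemma rr_est N z : (1 <= N)%nat -> 2 * Cmod z <= INR N ->
  Cmod (Cminus (rr N z) (Complex.RtoC 1)) <= Kz z / (INR N * INR (S N)).
Proof.
  intros H1 H2.
  set (n := INR N) in *. assert (Hn : 1 <= n) by (unfold n; apply (le_INR 1); lia).
  assert (HS : INR (S N) = n + 1) by (unfold n; apply S_INR).
  set (t := ln (n / INR (S N))).
  assert (Tup : t <= - / (n + 1)).
  { unfold t. rewrite HS. generalize (ln_le_sub1 (n / (n+1)) ltac:(apply Rdiv_lt_0_compat; lra)).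
    replace (n / (n + 1) - 1) with (- / (n+1)) by (field; lra). lra. }
  assert (Tlo : - / n <= t).
  { unfold t. rewrite HS. generalize (ln_ge_1sub (n / (n+1)) ltac:(apply Rdiv_lt_0_compat; lra)).
    replace (1 - / (n / (n + 1))) with (- / n) by (field; lra). lra. }
  set (q := / INR (S N)).
  assert (Hq : q = / (n + 1)) by (unfold q; rewrite HS; reflexivity).
  set (w := Cmult z (Complex.RtoC t)).
  set (m := Cmod z) in *.
  assert (Hm : 0 <= m) by apply Cmod_ge_0.
  assert (At : Rabs t <= / n).
  { apply Rabs_le. assert (/ (n+1) <= / n) by (apply Rinv_le_contravar; lra).
    assert (0 < / (n+1)) by (apply Rinv_0_lt_compat; lra). lra. }
  assert (Hinvn : 0 < / n) by (apply Rinv_0_lt_compat; lra).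
  assert (Mt : m * / n <= / 2).
  { apply (Rmult_le_reg_r n); [lra|]. rewrite Rmult_assoc, Rinv_l by lra.
    replace (/ 2 * n) with (n / 2) by (field). lra. }
  assert (Wf : fst w = fst z * t) by (unfold w; simpl; ring).
  assert (Ws : snd w = snd z * t) by (unfold w; simpl; ring).
  assert (Fz := fst_le_Cmod z). assert (Sz := snd_le_Cmod z). fold m in Fz, Sz.
  assert (Bf : Rabs (fst w) <= / 2).
  { rewrite Wf, Rabs_mult. eapply Rle_trans; [|exact Mt].
    apply Rmult_le_compat; try apply Rabs_pos; assumption. }
  assert (Bs : Rabs (snd w) <= / 2).
  { rewrite Ws, Rabs_mult. eapply Rle_trans; [|exact Mt].
    apply Rmult_le_compat; try apply Rabs_pos; assumption. }
  assert (EE := Cexp_near w Bf Bs).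
  set (E := Cminus (Cminus (Cexp w) (Complex.RtoC 1)) w) in EE.
  assert (W2 : fst w ^ 2 + snd w ^ 2 = m ^ 2 * t ^ 2).
  { rewrite Wf, Ws. unfold m. rewrite Cmod_sq. ring. }
  rewrite W2 in EE.
  assert (Rp : Rcpow (n / INR (S N)) z = Cexp w) by reflexivity.
  assert (ID : Cminus (rr N z) (Complex.RtoC 1) =
     Cplus (Cplus (Cmult z (Complex.RtoC (t + q))) (Cmult (Cmult z (Complex.RtoC q)) w))
           (Cmult (Cplus (Complex.RtoC 1) (Cmult z (Complex.RtoC q))) E)).
  { unfold rr. fold n. fold q. rewrite Rp. unfold E. rewrite RtoC_plus. unfold w. ring. }
  rewrite ID.
  assert (Hq0 : 0 < q) by (rewrite Hq; apply Rinv_0_lt_compat; lra).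
  assert (Hq1 : q <= 1) by (rewrite Hq; rewrite <- Rinv_1; apply Rinv_le_contravar; lra).
  assert (C1 : Cmod (Cmult z (Complex.RtoC (t + q))) <= m * (/ n - q)).
  { rewrite Cmod_mult, Cmod_RtoC. apply Rmult_le_compat_l; [exact Hm|].
    apply Rabs_le. rewrite Hq in *. lra. }
  assert (C2 : Cmod (Cmult (Cmult z (Complex.RtoC q)) w) <= m * q * (m * / n)).
  { unfold w. rewrite !Cmod_mult, !Cmod_RtoC. rewrite (Rabs_right q) by lra. fold m.
    apply Rmult_le_compat_l; [apply Rmult_le_pos; lra|]. apply Rmult_le_compat_l; lra. }
  assert (C3 : Cmod (Cmult (Cplus (Complex.RtoC 1) (Cmult z (Complex.RtoC q))) E) <= (1 + m) * (4 * (m ^ 2 * / n ^ 2))).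
  { rewrite Cmod_mult. apply Rmult_le_compat; try apply Cmod_ge_0.
    - eapply Rle_trans; [apply Cmod_triangle|]. rewrite Cmod_RtoC, Cmod_mult, Cmod_RtoC, Rabs_R1.
      rewrite (Rabs_right q) by lra. fold m. nra.
    - eapply Rle_trans; [exact EE|]. apply Rmult_le_compat_l; [lra|]. apply Rmult_le_compat_l; [nra|].
      assert (t ^ 2 = Rabs t * Rabs t) by (rewrite <- Rabs_mult; rewrite Rabs_right; [ring|nra]).
      replace (/ n ^ 2) with (/ n * / n) by (field; lra).
      generalize (Rabs_pos t); nra. }
  assert (Q1 : / n - q = / (n * (n + 1))) by (rewrite Hq; field; lra).
  assert (Q2 : q * / n = / (n * (n + 1))) by (rewrite Hq; field; lra).
  assert (Q3 : / n ^ 2 <= 2 * / (n * (n + 1))).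
  { replace (/ n ^ 2) with (/ (n * n)) by (field; lra).
    rewrite <- (Rmult_1_l (/ (n * n))). replace 2 with (2 * 1) by ring.
    apply Rle_trans with (2 * / (n * (n+1))); [|lra].
    apply (Rmult_le_reg_r (n * n * (n + 1))); [apply Rmult_lt_0_compat; [nra|lra]|].
    field_simplify; try lra. }
  rewrite HS. unfold Kz. fold m.
  eapply Rle_trans; [apply Cmod_triangle|].
  eapply Rle_trans; [apply Rplus_le_compat; [eapply Rle_trans; [apply Cmod_triangle|]; apply Rplus_le_compat; [exact C1|exact C2]|exact C3]|].
  set (P := / (n * (n + 1))) in *.
  assert (0 < P) by (unfold P; apply Rinv_0_lt_compat; nra).
  unfold Rdiv. fold P.
  replace (m * q * (m * / n)) with (m ^ 2 * (q * / n)) by ring. rewrite Q1, Q2.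
  assert (0 <= m^2) by nra.
  assert (0 <= (1 + m) * (4 * m ^ 2)) by nra.
  assert ((1 + m) * (4 * (m ^ 2 * / n ^ 2)) <= (1 + m) * (4 * m ^ 2) * (2 * P)).
  { replace ((1 + m) * (4 * (m ^ 2 * / n ^ 2))) with ((1 + m) * (4 * m ^ 2) * / n ^ 2) by ring.
    apply Rmult_le_compat_l; assumption. }
  nra.
Qed.

Lemma Kz_ge0 z : 0 <= Kz z.
Proof. unfold Kz. generalize (Cmod_ge_0 z); intro; nra. Qed.

Lemma Cinv_ne0 (x : C) : x <> Complex.RtoC 0 -> Complex.Cinv x <> Complex.RtoC 0.
Proof.
  intros H E. assert (Y := Cinv_l x H). rewrite E in Y. rewrite Cmult_0_l in Y.
  injection Y; lra.
Qed.

Lemma Gs_ne0 N z : not_nonpos_int z -> Gs N z <> Complex.RtoC 0.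
Proof.
  intro H. unfold Gs. cnorm. unfold Complex.Cdiv. apply Cmult_neq_0; [apply (poch_ne z (S N) H)|].
  apply Cinv_ne0. apply Cmult_neq_0; [apply RtoC_ne0, INR_fact_ne0| apply Rcpow_ne0].
Qed.

Lemma Gs_props z : exists N0 M, (1 <= N0)%nat /\ (exists L, Ccv (fun n => Gs n z) L) /\
  (forall N, (N0 <= N)%nat -> Cmod (Gs N z) <= M) /\
  (not_nonpos_int z -> exists m, 0 < m /\ forall N, (N0 <= N)%nat -> m <= Cmod (Gs N z)).
Proof.
  destruct (INR_unbounded (2 * Cmod z + 2 * Kz z + 1)) as [N0 HN0].
  assert (KK := Kz_ge0 z). assert (CC := Cmod_ge_0 z).
  assert (H1 : (1 <= N0)%nat).
  { destruct N0; [simpl in HN0; lra| lia]. }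
  assert (Hn : 0 < INR N0) by (apply INR_pos; lia).
  destruct (prod_conv (fun n => Gs n z) (Kz z) N0 H1 KK) as [CV [UB LB]].
  { intros N HN. rewrite Gs_step by lia.
    replace (Cminus (Cmult (Gs N z) (rr N z)) (Gs N z)) with (Cmult (Gs N z) (Cminus (rr N z) (Complex.RtoC 1))) by ring.
    rewrite Cmod_mult. apply Rmult_le_compat_l; [apply Cmod_ge_0|]. apply rr_est; [lia|].
    apply Rle_trans with (INR N0); [lra| apply le_INR; lia]. }
  exists N0, (Cmod (Gs N0 z) * exp (Kz z / INR N0)). split; [exact H1|]. split; [exact CV|]. split; [exact UB|].
  intro Hz. exists (Cmod (Gs N0 z) * (1 - Kz z / INR N0)). split; [|exact LB].
  apply Rmult_lt_0_compat; [apply Cmod_gt_0, Gs_ne0, Hz|].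
  assert (Kz z / INR N0 < 1); [|lra].
  apply (Rmult_lt_reg_r (INR N0)); [exact Hn|]. unfold Rdiv. rewrite Rmult_assoc, Rinv_l by lra. lra.
Qed.

Lemma rGamma_cv z : Ccv (fun n => Gs (S n) z) (rGamma z).
Proof.
  destruct (Gs_props z) as [N0 [M [_ [[L HL] _]]]].
  rewrite rGamma_Gs. rewrite (Clim_eq _ L); [|apply Ccv_shift in HL; exact HL].
  apply Ccv_shift in HL; exact HL.
Qed.

Lemma rGamma_ne0 z : not_nonpos_int z -> rGamma z <> Complex.RtoC 0.
Proof.
  intro Hz. destruct (Gs_props z) as [N0 [M [H1 [_ [_ LB]]]]]. destruct (LB Hz) as [m [Hm HB]].
  apply Cmod_gt_0. apply Rlt_le_trans with m; [exact Hm|].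
  apply (Ccv_Cmod_ge _ _ _ N0 (rGamma_cv z)). intros n Hn. apply HB. lia.
Qed.

Definition T2 (a b c : C) (m : nat) : C :=
  Cdiv (Cmult (poch a m) (poch b m)) (Cmult (RtoC (INR (fact m))) (poch c m)).

Lemma poch_Gs N z : @eq C (poch z (S N)) (Cmult (Gs N z) (Cmult (Complex.RtoC (INR (fact N))) (Rcpow (INR N) z))).
Proof.
  unfold Gs. cnorm. generalize (poch z (S N)); intro p. change Cplx with C in p.
  assert (A1 := Rcpow_ne0 (INR N) z). assert (A3 := RtoC_ne0 _ (INR_fact_ne0 N)).
  field. split; assumption.
Qed.

Lemma T2_Gs a b c N : not_nonpos_int c -> (1 <= N)%nat ->
  @eq C (T2 a b c (S N)) (Cmult (Cmult (Cmult (Gs N a) (Gs N b)) (Complex.Cinv (Gs N c)))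
     (Cmult (Rcpow (INR N) (Cminus (Cplus a b) c)) (Complex.Cinv (Complex.RtoC (INR (S N)))))).
Proof.
  intros Hc HN. unfold T2. rewrite !poch_Gs. rewrite fact_simpl, mult_INR. cnorm.
  rewrite RtoC_mult.
  assert (E : Rcpow (INR N) a = Cmult (Rcpow (INR N) (Cminus (Cplus a b) c)) (Cmult (Rcpow (INR N) c) (Complex.Cinv (Rcpow (INR N) b)))).
  { assert (Q : Cmult (Rcpow (INR N) a) (Rcpow (INR N) b) = Cmult (Rcpow (INR N) (Cminus (Cplus a b) c)) (Rcpow (INR N) c)).
    { rewrite <- !Rcpow_add. f_equal. ring. }
    assert (A1 := Rcpow_ne0 (INR N) b).
    transitivity (Cmult (Cmult (Rcpow (INR N) a) (Rcpow (INR N) b)) (Complex.Cinv (Rcpow (INR N) b))).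
    { revert A1. generalize (Rcpow (INR N) b) (Rcpow (INR N) a). intros u v Hu. cnorm. field. exact Hu. }
    rewrite Q. revert A1. generalize (Rcpow (INR N) b) (Rcpow (INR N) c) (Rcpow (INR N) (Cminus (Cplus a b) c)).
    intros u v w Hu. cnorm. field. exact Hu. }
  rewrite E.
  assert (A1 := Rcpow_ne0 (INR N) b). assert (A2 := Rcpow_ne0 (INR N) c).
  assert (A3 := RtoC_ne0 _ (INR_fact_ne0 N)).
  assert (A4 := RtoC_ne0 (INR (S N)) ltac:(apply not_0_INR; lia)).
  assert (A5 := Gs_ne0 N c Hc).
  field. repeat split; assumption.
Qed.

Lemma T2_bound a b c : not_nonpos_int c ->
  exists N0 C0, (1 <= N0)%nat /\ 0 <= C0 /\ forall N, (N0 <= N)%nat ->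
    Cmod (T2 a b c (S N)) <= C0 * (exp (- fst (Cminus c (Cplus a b)) * ln (INR N)) / INR (S N)).
Proof.
  intro Hc.
  destruct (Gs_props a) as [Na [Ma [Ha1 [_ [UBa _]]]]].
  destruct (Gs_props b) as [Nb [Mb [Hb1 [_ [UBb _]]]]].
  destruct (Gs_props c) as [Nc [Mc [Hc1 [_ [_ LBc]]]]].
  destruct (LBc Hc) as [mc [Hmc LB]].
  exists (Nat.max Na (Nat.max Nb Nc)), (Rmax 0 Ma * Rmax 0 Mb / mc). split; [lia|]. split.
  { unfold Rdiv. apply Rmult_le_pos; [apply Rmult_le_pos; apply Rmax_l|left; apply Rinv_0_lt_compat; exact Hmc]. }
  intros N HN. rewrite T2_Gs by (auto; lia).
  assert (HNp : 0 < INR (S N)) by (apply INR_pos; lia).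
  rewrite !Cmod_mult, !Cmod_inv, Cmod_Rcpow, Cmod_RtoC, Rabs_right by
    (try lra; try apply Gs_ne0, Hc; try (apply RtoC_ne0; lra)).
  assert (E : fst (Cminus (Cplus a b) c) = - fst (Cminus c (Cplus a b))) by (simpl; ring).
  rewrite E.
  set (X := exp (- fst (Cminus c (Cplus a b)) * ln (INR N))).
  assert (HX : 0 < X) by apply exp_pos.
  assert (A : Cmod (Gs N a) <= Rmax 0 Ma) by (eapply Rle_trans; [apply UBa; lia|apply Rmax_r]).
  assert (B : Cmod (Gs N b) <= Rmax 0 Mb) by (eapply Rle_trans; [apply UBb; lia|apply Rmax_r]).
  assert (Cc : mc <= Cmod (Gs N c)) by (apply LB; lia).
  assert (D : / Cmod (Gs N c) <= / mc) by (apply Rinv_le_contravar; lra).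
  assert (P1 : Cmod (Gs N a) * Cmod (Gs N b) <= Rmax 0 Ma * Rmax 0 Mb) by
    (apply Rmult_le_compat; try apply Cmod_ge_0; assumption).
  assert (0 < / Cmod (Gs N c)) by (apply Rinv_0_lt_compat; lra).
  assert (0 < / INR (S N)) by (apply Rinv_0_lt_compat; lra).
  unfold Rdiv. replace (Rmax 0 Ma * Rmax 0 Mb * / mc * (X * / INR (S N))) with
    ((Rmax 0 Ma * Rmax 0 Mb) * / mc * (X * / INR (S N))) by ring.
  apply Rmult_le_compat_r; [apply Rmult_le_pos; lra|].
  apply Rmult_le_compat; try assumption; [apply Rmult_le_pos; apply Cmod_ge_0|lra].
Qed.

Lemma T2_abs a b c : not_nonpos_int c -> 0 < fst (Cminus c (Cplus a b)) ->
  ex_series (fun m => Cmod (T2 a b c m)).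
Proof.
  intros Hc Hd. destruct (T2_bound a b c Hc) as [N0 [C0 [H1 [HC0 HB]]]].
  apply (ex_series_incr_n _ (S (S N0))).
  apply (ex_series_R_le _ (fun n => C0 * (exp (- fst (Cminus c (Cplus a b)) * ln (INR (S (n + N0)))) / INR (S (n + N0))))).
  - intro n. rewrite Rabs_right by (apply Rle_ge, Cmod_ge_0).
    replace (S (S N0) + n)%nat with (S (S (n + N0))) by lia.
    eapply Rle_trans; [apply HB; lia|]. apply Rmult_le_compat_l; [exact HC0|].
    unfold Rdiv. apply Rmult_le_compat_l; [left; apply exp_pos|].
    apply Rinv_le_contravar; [apply INR_pos; lia|]. apply le_INR; lia.
  - apply ex_series_R_scal. apply ex_series_p; [exact Hd|exact H1].
Qed.

Lemma T2_lim a b c : not_nonpos_int c -> 0 < fst (Cminus c (Cplus a b)) ->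
  Ccv (fun N => Cmult (Complex.RtoC (INR (S N))) (T2 a b c (S N))) (Complex.RtoC 0).
Proof.
  intros Hc Hd. destruct (T2_bound a b c Hc) as [N0 [C0 [H1 [HC0 HB]]]].
  apply (Ccv_shift_n _ N0).
  apply (Ccv_bound _ _ (fun n => C0 * exp (- fst (Cminus c (Cplus a b)) * ln (INR (n + N0))))).
  - intro n. replace (Cminus (Cmult (Complex.RtoC (INR (S (n + N0)))) (T2 a b c (S (n + N0)))) (Complex.RtoC 0))
      with (Cmult (Complex.RtoC (INR (S (n + N0)))) (T2 a b c (S (n + N0)))) by ring.
    rewrite Cmod_mult, Cmod_RtoC. assert (HS : 0 < INR (S (n + N0))) by (apply INR_pos; lia).
    rewrite Rabs_right by lra.
    eapply Rle_trans; [apply Rmult_le_compat_l; [lra|apply HB; lia]|].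
    right. field. lra.
  - replace 0 with (C0 * 0) by ring. apply is_lim_seq_mult'; [apply is_lim_seq_const|].
    apply (is_lim_seq_incr_n (fun n => exp (- fst (Cminus c (Cplus a b)) * ln (INR n))) N0).
    apply lim_pow_neg, Hd.
Qed.

Definition F2 (a b c : C) : C := Clim (Csum (T2 a b c)).

Lemma F2_cv a b c : not_nonpos_int c -> 0 < fst (Cminus c (Cplus a b)) -> Cseries_cv (T2 a b c) (F2 a b c).
Proof.
  intros Hc Hd. destruct (Cseries_ex _ (T2_abs a b c Hc Hd)) as [l Hl].
  unfold F2. rewrite (Clim_eq _ l Hl). exact Hl.
Qed.

Lemma poch_shift (c : C) m : @eq C (Cmult c (poch (Cplus c (Complex.RtoC 1)) m)) (Cmult (poch c m) (Cplus c (Complex.RtoC (INR m)))).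
Proof.
  induction m.
  - simpl. cnorm. change (INR 0) with 0. ring.
  - rewrite !poch_S. cnorm. rewrite S_INR, RtoC_plus.
    transitivity (Cmult (Cmult c (poch (Cplus c (Complex.RtoC 1)) m)) (Cplus (Cplus c (Complex.RtoC 1)) (Complex.RtoC (INR m)))); [ring|].
    rewrite IHm. ring.
Qed.

Lemma c_ne0 (c : C) : not_nonpos_int c -> c <> Complex.RtoC 0.
Proof. intros H E. apply (nn_ne c 0 H). rewrite E. change (INR 0) with 0. cnorm. apply injective_projections; simpl; ring. Qed.

Definition Gt (a b c : C) (m : nat) : C := Cmult (Cmult (Complex.Copp c) (Complex.RtoC (INR m))) (T2 a b c m).

Lemma contig_term a b c m : not_nonpos_int c ->
  @eq C (Cminus (Cmult (Cmult c (Cminus c (Cplus a b))) (T2 a b c m))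
         (Cmult (Cmult (Cminus c a) (Cminus c b)) (T2 a b (Cplus c (Complex.RtoC 1)) m)))
   (Cminus (Gt a b c (S m)) (Gt a b c m)).
Proof.
  intro Hc. unfold Gt, T2. rewrite !poch_S, fact_simpl, mult_INR. cnorm.
  assert (Q : poch (Cplus c (Complex.RtoC 1)) m =
     Cmult (Cmult (poch c m) (Cplus c (Complex.RtoC (INR m)))) (Complex.Cinv c)).
  { assert (Y := poch_shift c m). assert (C0 := c_ne0 c Hc).
    rewrite <- Y. generalize (poch (Cplus c (Complex.RtoC 1)) m). intro p. cnorm. field. exact C0. }
  rewrite Q. rewrite S_INR, !RtoC_mult, RtoC_plus.
  assert (A1 := c_ne0 c Hc). assert (A2 := poch_ne c m Hc). assert (A3 := nn_ne c m Hc).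
  assert (A4 := RtoC_ne0 _ (INR_fact_ne0 m)).
  assert (A5 : Cplus (Complex.RtoC (INR m)) (Complex.RtoC 1) <> Complex.RtoC 0).
  { rewrite <- RtoC_plus. apply RtoC_ne0. generalize (pos_INR m); lra. }
  revert A1 A2 A3 A4 A5. generalize (poch a m) (poch b m) (poch c m). intros pa pb pc. cnorm. intros.
  field. repeat split; assumption.
Qed.

Lemma nn_shift1 (c : C) : not_nonpos_int c -> not_nonpos_int (Cplus c (Complex.RtoC 1)).
Proof.
  intros H n E. apply (H (S n)). cnorm. rewrite S_INR.
  apply (f_equal (fun z => Cminus z (Complex.RtoC 1))) in E.
  replace (Cminus (Cplus c (Complex.RtoC 1)) (Complex.RtoC 1)) with c in E by ring.
  rewrite E. apply injective_projections; simpl; ring.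
Qed.

Lemma re_shift1 (a b c : C) : 0 < fst (Cminus c (Cplus a b)) -> 0 < fst (Cminus (Cplus c (Complex.RtoC 1)) (Cplus a b)).
Proof. simpl. lra. Qed.

Lemma F2_contig a b c : not_nonpos_int c -> 0 < fst (Cminus c (Cplus a b)) ->
  Cmult (Cmult c (Cminus c (Cplus a b))) (F2 a b c) =
  Cmult (Cmult (Cminus c a) (Cminus c b)) (F2 a b (Cplus c (Complex.RtoC 1))).
Proof.
  intros Hc Hd.
  set (k1 := Cmult c (Cminus c (Cplus a b))). set (k2 := Cmult (Cminus c a) (Cminus c b)).
  set (D := fun m => Cplus (Cmult k1 (T2 a b c m)) (Cmult (Complex.Copp k2) (T2 a b (Cplus c (Complex.RtoC 1)) m))).
  assert (S1 : Cseries_cv D (Cplus (Cmult k1 (F2 a b c)) (Cmult (Complex.Copp k2) (F2 a b (Cplus c (Complex.RtoC 1)))))).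
  { apply Cseries_plus; apply Cseries_scal; apply F2_cv; auto using nn_shift1, re_shift1. }
  assert (S2 : Cseries_cv D (Complex.RtoC 0)).
  { unfold Cseries_cv. apply Ccv_shift.
    apply (Ccv_ext (fun N => Cmult (Complex.Copp c) (Cmult (Complex.RtoC (INR (S (S N)))) (T2 a b c (S (S N)))))).
    - intro N. transitivity (Gt a b c (S (S N))); [unfold Gt; ring|].
      assert (G : forall M, Csum D M = Gt a b c (S M)).
      { induction M.
        + change (Csum D 0) with (D 0%nat). transitivity (Cminus (Gt a b c 1) (Gt a b c 0)).
          * rewrite <- contig_term by exact Hc. unfold D, k1, k2. cnorm. ring.
          * unfold Gt. change (INR 0) with 0. cnorm. ring.
        + simpl Csum. rewrite IHM. cnorm. transitivity (Cplus (Gt a b c (S M)) (Cminus (Gt a b c (S (S M))) (Gt a b c (S M)))); [|ring].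
          f_equal. rewrite <- contig_term by exact Hc. unfold D, k1, k2. cnorm. ring. }
      rewrite G. reflexivity.
    - replace (Complex.RtoC 0) with (Cmult (Complex.Copp c) (Complex.RtoC 0)) by ring.
      apply Ccv_mult; [apply Ccv_const|].
      apply (Ccv_shift (fun N => Cmult (Complex.RtoC (INR (S N))) (T2 a b c (S N)))).
      apply T2_lim; assumption. }
  assert (E := Ccv_unique _ _ _ S1 S2).
  apply (f_equal (fun z => Cplus z (Cmult k2 (F2 a b (Cplus c (Complex.RtoC 1)))))) in E.
  transitivity (Cmult k1 (F2 a b c)); [reflexivity|].
  rewrite <- (Cplus_0_l (Cmult k2 (F2 a b (Cplus c (Complex.RtoC 1))))).
  rewrite <- E. ring.
Qed.

Lemma cplus_S (c : C) n : Cplus c (Complex.RtoC (INR (S n))) = Cplus (Cplus c (Complex.RtoC (INR n))) (Complex.RtoC 1).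
Proof. rewrite S_INR, RtoC_plus. ring. Qed.

Lemma nn_shiftn (c : C) n : not_nonpos_int c -> not_nonpos_int (Cplus c (Complex.RtoC (INR n))).
Proof.
  intro H; induction n.
  - change (INR 0) with 0. replace (Cplus c (Complex.RtoC 0)) with c by ring. exact H.
  - rewrite cplus_S. apply nn_shift1, IHn.
Qed.

Lemma re_shiftn (a b c : C) n : 0 < fst (Cminus c (Cplus a b)) -> 0 < fst (Cminus (Cplus c (Complex.RtoC (INR n))) (Cplus a b)).
Proof. simpl. generalize (pos_INR n). lra. Qed.

Lemma F2_iter a b c n : not_nonpos_int c -> 0 < fst (Cminus c (Cplus a b)) ->
  @eq C (Cmult (Cmult (F2 a b c) (poch c n)) (poch (Cminus c (Cplus a b)) n))
   (Cmult (Cmult (poch (Cminus c a) n) (poch (Cminus c b) n)) (F2 a b (Cplus c (Complex.RtoC (INR n))))).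
Proof.
  intros Hc Hd. induction n.
  - simpl. cnorm. change (INR 0) with 0. replace (Cplus c (Complex.RtoC 0)) with c by ring. ring.
  - rewrite !poch_S. cnorm.
    assert (K := F2_contig a b (Cplus c (Complex.RtoC (INR n))) (nn_shiftn c n Hc) (re_shiftn a b c n Hd)).
    rewrite cplus_S.
    transitivity (Cmult (Cmult (Cmult (F2 a b c) (poch c n)) (poch (Cminus c (Cplus a b)) n))
      (Cmult (Cplus c (Complex.RtoC (INR n))) (Cplus (Cminus c (Cplus a b)) (Complex.RtoC (INR n))))); [ring|].
    rewrite IHn.
    transitivity (Cmult (Cmult (poch (Cminus c a) n) (poch (Cminus c b) n))
       (Cmult (Cmult (Cplus c (Complex.RtoC (INR n))) (Cminus (Cplus c (Complex.RtoC (INR n))) (Cplus a b))) (F2 a b (Cplus c (Complex.RtoC (INR n)))))); [ring|].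
    rewrite K. ring.
Qed.

Lemma nn_pos (w : C) : 0 < fst w -> not_nonpos_int w.
Proof. intros H n E. rewrite E in H. simpl in H. generalize (pos_INR n). lra. Qed.

Lemma Cmod_shift_ge (w : C) s : 0 <= fst w -> 0 <= s -> Cmod w <= Cmod (Cplus w (Complex.RtoC s)).
Proof. intros H1 H2. unfold Cmod. apply sqrt_le_1_alt. simpl. nra. Qed.

Lemma poch_mono (w : C) s m : 0 <= fst w -> 0 <= s -> Cmod (poch w m) <= Cmod (poch (Cplus w (Complex.RtoC s)) m).
Proof.
  intros H1 H2. induction m.
  - simpl. lra.
  - rewrite !poch_S. cnorm. rewrite !Cmod_mult. apply Rmult_le_compat; try apply Cmod_ge_0; [exact IHm|].
    replace (Cplus (Cplus w (Complex.RtoC s)) (Complex.RtoC (INR m))) with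
      (Cplus (Cplus w (Complex.RtoC (INR m))) (Complex.RtoC s)) by ring.
    apply Cmod_shift_ge; [simpl; generalize (pos_INR m); lra|exact H2].
Qed.

Lemma T2_mono a b (w : C) s m : 0 < fst w -> 0 <= s -> Cmod (T2 a b (Cplus w (Complex.RtoC s)) m) <= Cmod (T2 a b w m).
Proof.
  intros H1 H2. unfold T2. cnorm. unfold Complex.Cdiv.
  assert (N1 := poch_ne w m (nn_pos w H1)).
  assert (N2 := poch_ne (Cplus w (Complex.RtoC s)) m (nn_pos (Cplus w (Complex.RtoC s)) ltac:(simpl; lra))).
  assert (N3 := RtoC_ne0 _ (INR_fact_ne0 m)).
  rewrite !Cmod_mult, !Cmod_inv by (apply Cmult_neq_0; assumption). rewrite !Cmod_mult.
  apply Rmult_le_compat_l; [apply Rmult_le_pos; apply Cmod_ge_0|].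
  apply Rinv_le_contravar.
  - apply Rmult_lt_0_compat; apply Cmod_gt_0; assumption.
  - apply Rmult_le_compat_l; [apply Cmod_ge_0|]. apply poch_mono; lra.
Qed.

Lemma poch_S_left (a : C) m : @eq C (poch a (S m)) (Cmult a (poch (Cplus a (Complex.RtoC 1)) m)).
Proof. rewrite poch_shift. rewrite poch_S. cnorm. reflexivity. Qed.

Lemma T2_S_bound a b (c : C) m : not_nonpos_int c ->
  Cmod (T2 a b c (S m)) <= Cmod a * Cmod b / Cmod c * Cmod (T2 (Cplus a (Complex.RtoC 1)) (Cplus b (Complex.RtoC 1)) (Cplus c (Complex.RtoC 1)) m).
Proof.
  intro Hc. assert (C0 := c_ne0 c Hc).
  assert (E : @eq C (T2 a b c (S m)) (Cmult (Cmult (Cmult a b) (Complex.Cinv c))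
     (Cmult (T2 (Cplus a (Complex.RtoC 1)) (Cplus b (Complex.RtoC 1)) (Cplus c (Complex.RtoC 1)) m) (Complex.Cinv (Complex.RtoC (INR (S m))))))).
  { unfold T2. rewrite !poch_S_left, fact_simpl, mult_INR. cnorm. rewrite RtoC_mult.
    assert (A2 := poch_ne _ m (nn_shift1 c Hc)).
    assert (A4 := RtoC_ne0 _ (INR_fact_ne0 m)).
    assert (A5 := RtoC_ne0 (INR (S m)) ltac:(apply not_0_INR; lia)).
    revert A2. generalize (poch (Cplus c (Complex.RtoC 1)) m). intros p A2. cnorm.
    field. repeat split; assumption. }
  rewrite E. rewrite !Cmod_mult, !Cmod_inv, Cmod_RtoC by (try apply RtoC_ne0; try apply not_0_INR; auto).
  assert (HS : 1 <= INR (S m)) by (apply (le_INR 1); lia). rewrite Rabs_right by lra.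
  assert (/ INR (S m) <= 1) by (rewrite <- Rinv_1; apply Rinv_le_contravar; lra).
  assert (0 < / INR (S m)) by (apply Rinv_0_lt_compat; lra).
  assert (0 < / Cmod c) by (apply Rinv_0_lt_compat, Cmod_gt_0, C0).
  generalize (Cmod_ge_0 a) (Cmod_ge_0 b) (Cmod_ge_0 (T2 (Cplus a (Complex.RtoC 1)) (Cplus b (Complex.RtoC 1)) (Cplus c (Complex.RtoC 1)) m)).
  intros. unfold Rdiv.
  set (X := Cmod (T2 (Cplus a (Complex.RtoC 1)) (Cplus b (Complex.RtoC 1)) (Cplus c (Complex.RtoC 1)) m)) in *.
  assert (0 <= Cmod a * Cmod b * / Cmod c * X) by (repeat apply Rmult_le_pos; lra).
  replace (Cmod a * Cmod b * / Cmod c * (X * / INR (S m))) with ((Cmod a * Cmod b * / Cmod c * X) * / INR (S m)) by ring.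
  nra.
Qed.

Lemma T2_0 a b c : T2 a b c 0 = Complex.RtoC 1.
Proof. unfold T2. simpl. cnorm. apply injective_projections; simpl; field. Qed.

Lemma F2_sub1 a b c : not_nonpos_int c -> 0 < fst (Cminus c (Cplus a b)) ->
  Cseries_cv (fun m => T2 a b c (S m)) (Cminus (F2 a b c) (Complex.RtoC 1)).
Proof.
  intros Hc Hd.
  assert (A := T2_abs a b c Hc Hd). apply (ex_series_incr_1 (fun m => Cmod (T2 a b c m))) in A.
  destruct (Cseries_ex _ A) as [l Hl].
  assert (E := Ccv_unique _ _ _ (Cseries_shift _ _ Hl) (F2_cv a b c Hc Hd)).
  rewrite T2_0 in E. rewrite <- E.
  assert (Q : Cminus (Cplus (Complex.RtoC 1) l) (Complex.RtoC 1) = l) by ring. rewrite Q. exact Hl.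
Qed.

Lemma F2_lim1 a b c : not_nonpos_int c -> 0 < fst (Cminus c (Cplus a b)) ->
  Ccv (fun n => F2 a b (Cplus c (Complex.RtoC (INR n)))) (Complex.RtoC 1).
Proof.
  intros Hc Hd.
  destruct (INR_unbounded (- fst c)) as [n1 Hn1].
  set (n0 := S n1).
  assert (Hn0 : fst c + INR n0 > 1) by (unfold n0; rewrite S_INR; lra). assert (Hn1b : 1 <= INR n0) by (unfold n0; apply (le_INR 1); lia). clearbody n0.
  set (a1 := Cplus a (Complex.RtoC 1)). set (b1 := Cplus b (Complex.RtoC 1)).
  set (w := Cplus (Cplus c (Complex.RtoC (INR n0))) (Complex.RtoC 1)).
  assert (Hw : 0 < fst w) by (unfold w; simpl; lra).
  assert (AW : ex_series (fun m => Cmod (T2 a1 b1 w m))).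
  { apply T2_abs; [apply nn_pos, Hw|]. unfold w, a1, b1; simpl. simpl in Hd. lra. }
  set (B := Series (fun m => Cmod (T2 a1 b1 w m))).
  assert (HB : 0 <= B).
  { unfold B. apply Rle_trans with (sum_n (fun m => Cmod (T2 a1 b1 w m)) 0).
    - rewrite sum_O. apply Cmod_ge_0.
    - apply sum_n_le_Series; [intro; apply Cmod_ge_0|exact AW]. }
  apply (Ccv_shift_n _ n0).
  apply (Ccv_bound _ _ (fun k => Cmod a * Cmod b * B * / (fst c + INR n0 + INR k))).
  - intro k. set (ck := Cplus c (Complex.RtoC (INR (k + n0)))).
    assert (Hck : fst ck = fst c + INR n0 + INR k) by (unfold ck; simpl; rewrite plus_INR; ring).
    assert (Hck0 : 0 < fst ck) by (rewrite Hck; generalize (pos_INR k); lra).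
    assert (Cck : fst ck <= Cmod ck) by (generalize (fst_le_Cmod ck); generalize (Rle_abs (fst ck)); lra).
    assert (Sub := F2_sub1 a b ck (nn_pos ck Hck0) ltac:(unfold ck; apply re_shiftn, Hd)).
    set (K := Cmod a * Cmod b / Cmod ck).
    assert (HK : 0 <= K) by (unfold K, Rdiv; apply Rmult_le_pos; [apply Rmult_le_pos; apply Cmod_ge_0|left; apply Rinv_0_lt_compat; lra]).
    assert (L := Cseries_Cmod_le _ _ (fun m => K * Cmod (T2 a1 b1 w m)) Sub).
    rewrite Series_scal_l in L. fold B in L.
    eapply Rle_trans; [apply L|].
    + intro m. eapply Rle_trans; [apply T2_S_bound, nn_pos, Hck0|]. fold K. fold a1 b1.
      apply Rmult_le_compat_l; [exact HK|].
      replace (Cplus ck (Complex.RtoC 1)) with (Cplus w (Complex.RtoC (INR k))).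
      * apply T2_mono; [exact Hw|apply pos_INR].
      * unfold w, ck. rewrite plus_INR, RtoC_plus. ring.
    + apply (@ex_series_scal_l R_AbsRing R_NormedModule K _ AW).
    + unfold K, Rdiv. rewrite <- Hck.
      assert (/ Cmod ck <= / fst ck) by (apply Rinv_le_contravar; lra).
      assert (0 <= Cmod a * Cmod b) by (apply Rmult_le_pos; apply Cmod_ge_0).
      replace (Cmod a * Cmod b * / Cmod ck * B) with ((Cmod a * Cmod b * B) * / Cmod ck) by ring.
      apply Rmult_le_compat_l; [apply Rmult_le_pos; lra|lra].
  - replace 0 with (Cmod a * Cmod b * B * 0) by ring. apply is_lim_seq_mult'; [apply is_lim_seq_const|].
    replace (Finite 0) with (Rbar_inv p_infty) by reflexivity.
    apply is_lim_seq_inv; [|discriminate].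
    replace p_infty with (Rbar_plus (fst c + INR n0) p_infty) by reflexivity.
    apply (is_lim_seq_plus _ _ (fst c + INR n0) p_infty); [apply is_lim_seq_const|apply is_lim_seq_INR|reflexivity].
Qed.

Lemma Cmult_cancel_r (X Y K : C) : K <> Complex.RtoC 0 -> Cmult X K = Cmult Y K -> X = Y.
Proof.
  intros HK E. transitivity (Cmult (Cmult X K) (Complex.Cinv K)); [field; exact HK|].
  rewrite E. field. exact HK.
Qed.

Theorem gauss a b c : not_nonpos_int c -> 0 < fst (Cminus c (Cplus a b)) ->
  Cmult (Cmult (F2 a b c) (rGamma c)) (rGamma (Cminus c (Cplus a b))) =
  Cmult (rGamma (Cminus c a)) (rGamma (Cminus c b)).
Proof.
  intros Hc Hd. set (d := Cminus c (Cplus a b)).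
  assert (SEQ : forall k, Cmult (Cmult (F2 a b c) (Gs (S k) c)) (Gs (S k) d) =
     Cmult (Cmult (Gs (S k) (Cminus c a)) (Gs (S k) (Cminus c b))) (F2 a b (Cplus c (Complex.RtoC (INR (S (S k))))))).
  { intro k. set (N := S k). assert (IT := F2_iter a b c (S N) Hc Hd). fold d in IT.
    rewrite !poch_Gs in IT.
    set (f := Complex.RtoC (INR (fact N))) in *.
    assert (Hf : f <> Complex.RtoC 0) by apply RtoC_ne0, INR_fact_ne0.
    assert (RR : Cmult (Rcpow (INR N) c) (Rcpow (INR N) d) = Cmult (Rcpow (INR N) (Cminus c a)) (Rcpow (INR N) (Cminus c b))).
    { rewrite <- !Rcpow_add. f_equal. unfold d. ring. }
    apply (Cmult_cancel_r _ _ (Cmult (Cmult f f) (Cmult (Rcpow (INR N) (Cminus c a)) (Rcpow (INR N) (Cminus c b))))).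
    { apply Cmult_neq_0; apply Cmult_neq_0; auto using Rcpow_ne0. }
    rewrite <- RR.
    transitivity (Cmult (Cmult (F2 a b c) (Cmult (Gs N c) (Cmult f (Rcpow (INR N) c)))) (Cmult (Gs N d) (Cmult f (Rcpow (INR N) d)))); [ring|].
    rewrite IT. rewrite RR. ring. }
  assert (L1 : Ccv (fun k => Cmult (Cmult (F2 a b c) (Gs (S k) c)) (Gs (S k) d)) (Cmult (Cmult (F2 a b c) (rGamma c)) (rGamma d))).
  { apply Ccv_mult; [apply Ccv_mult; [apply Ccv_const|apply rGamma_cv]|apply rGamma_cv]. }
  assert (L2 : Ccv (fun k => Cmult (Cmult (Gs (S k) (Cminus c a)) (Gs (S k) (Cminus c b))) (F2 a b (Cplus c (Complex.RtoC (INR (S (S k)))))))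
     (Cmult (Cmult (rGamma (Cminus c a)) (rGamma (Cminus c b))) (Complex.RtoC 1))).
  { apply Ccv_mult; [apply Ccv_mult; apply rGamma_cv|].
    apply (Ccv_shift (fun k => F2 a b (Cplus c (Complex.RtoC (INR (S k)))))).
    apply (Ccv_shift (fun k => F2 a b (Cplus c (Complex.RtoC (INR k))))).
    apply F2_lim1; assumption. }
  assert (L1' := Ccv_ext _ _ _ SEQ L1).
  rewrite (Ccv_unique _ _ _ L1' L2). ring.
Qed.

Lemma Ccv_RtoC (u : nat -> R) (l : R) : is_lim_seq u l -> Ccv (fun n => Complex.RtoC (u n)) (Complex.RtoC l).
Proof. intro H. apply Ccv_intro; simpl; [exact H|apply is_lim_seq_const]. Qed.

Lemma rGamma_rec z : rGamma z = Cmult z (rGamma (Cplus z (Complex.RtoC 1))).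
Proof.
  assert (E : forall n, Cmult z (Gs (S n) (Cplus z (Complex.RtoC 1))) =
     Cmult (Gs (S n) z) (Cplus (Complex.RtoC 1) (Cmult (Cplus z (Complex.RtoC 1)) (Complex.RtoC (/ INR (S n)))))).
  { intro n. unfold Gs. cnorm. set (N := S n).
    assert (HN : 0 < INR N) by (apply INR_pos; unfold N; lia).
    rewrite Rcpow_add, Rcpow_one_exp by exact HN.
    assert (P := poch_shift z (S N)).
    assert (A1 := Rcpow_ne0 (INR N) z). assert (A3 := RtoC_ne0 _ (INR_fact_ne0 N)).
    assert (A4 := RtoC_ne0 (INR N) ltac:(lra)).
    rewrite RtoC_inv by lra.
    transitivity (Cmult (Cmult z (poch (Cplus z (Complex.RtoC 1)) (S N))) (Complex.Cinv (Cmult (Complex.RtoC (INR (fact N))) (Cmult (Rcpow (INR N) z) (Complex.RtoC (INR N)))))).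
    { unfold Complex.Cdiv. cnorm. ring. }
    rewrite P. rewrite S_INR, RtoC_plus.
    revert A1 A3 A4. generalize (poch z (S N)) (Rcpow (INR N) z). intros p r A1 A3 A4. cnorm.
    unfold Complex.Cdiv. field.
    repeat split; try assumption. }
  apply (Ccv_unique (fun n => Cmult z (Gs (S n) (Cplus z (Complex.RtoC 1))))).
  - eapply Ccv_ext; [intro n; symmetry; apply E|].
    assert (Q : Cmult (rGamma z) (Cplus (Complex.RtoC 1) (Cmult (Cplus z (Complex.RtoC 1)) (Complex.RtoC 0))) = rGamma z) by ring.
    rewrite <- Q.
    apply Ccv_mult; [apply rGamma_cv|]. apply Ccv_plus; [apply Ccv_const|]. apply Ccv_mult; [apply Ccv_const|].
    apply Ccv_RtoC. apply (is_lim_seq_ext (fun n => / INR (n + 1))); [intro; f_equal; f_equal; lia|].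
    apply lim_inv_INR.
  - apply Ccv_mult; [apply Ccv_const|apply rGamma_cv].
Qed.

Lemma F32_0 a b c d : F32_term a b (Cadd c (RtoC 1)) d c 0 = Complex.RtoC 1.
Proof. unfold F32_term. simpl. cnorm. apply injective_projections; simpl; field. Qed.

Lemma F32_S a b (c d : C) j : not_nonpos_int c -> not_nonpos_int d ->
  @eq C (F32_term a b (Cadd c (RtoC 1)) d c (S j))
  (Cplus (T2 a b d (S j)) (Cmult (Cmult (Cmult a b) (Complex.Cinv (Cmult c d)))
       (T2 (Cplus a (Complex.RtoC 1)) (Cplus b (Complex.RtoC 1)) (Cplus d (Complex.RtoC 1)) j))).
Proof.
  intros Hc Hd. unfold F32_term, T2. cnorm.
  assert (PC := poch_shift c (S j)).
  assert (C0 := c_ne0 c Hc). assert (D0 := c_ne0 d Hd).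
  assert (Qc : poch (Cplus c (Complex.RtoC 1)) (S j) =
     Cmult (Cmult (poch c (S j)) (Cplus c (Complex.RtoC (INR (S j))))) (Complex.Cinv c)).
  { rewrite <- PC. generalize (poch (Cplus c (Complex.RtoC 1)) (S j)). intro p. cnorm. field. exact C0. }
  rewrite Qc. rewrite !(poch_S_left a), !(poch_S_left b), !(poch_S_left d). cnorm.
  rewrite fact_simpl, mult_INR, RtoC_mult, S_INR, RtoC_plus.
  assert (A1 := poch_ne c (S j) Hc).
  assert (A2 := poch_ne _ j (nn_shift1 d Hd)).
  assert (A4 := RtoC_ne0 _ (INR_fact_ne0 j)).
  assert (A5 : Cplus (Complex.RtoC (INR j)) (Complex.RtoC 1) <> Complex.RtoC 0).
  { rewrite <- RtoC_plus. apply RtoC_ne0. generalize (pos_INR j); lra. }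
  revert A1 A2 A4 A5. generalize (poch c (S j)) (poch (Cplus d (Complex.RtoC 1)) j)
    (poch (Cplus a (Complex.RtoC 1)) j) (poch (Cplus b (Complex.RtoC 1)) j).
  intros pc pd pa pb A1 A2 A4 A5. cnorm. unfold Complex.Cdiv.
  field. repeat split; assumption.
Qed.

Lemma main_gen a b (c d : C) : not_nonpos_int c -> not_nonpos_int d ->
  0 < fst (Cminus (Cminus d (Cplus a b)) (Complex.RtoC 1)) ->
  Cseries_cv (F32_term a b (Cadd c (RtoC 1)) d c)
   (Complex.Cdiv (Cmult (Cmult (Cmult (Cmult
      (Cplus (Cmult c (Cminus (Cminus d (Cplus a b)) (Complex.RtoC 1))) (Cmult a b))
      (Complex.Cinv (rGamma d)))
      (Complex.Cinv (rGamma (Cminus (Cminus d (Cplus a b)) (Complex.RtoC 1)))))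
      (rGamma (Cminus d b))) (rGamma (Cminus d a))) c).
Proof.
  intros Hc Hd He.
  set (e := Cminus (Cminus d (Cplus a b)) (Complex.RtoC 1)) in *.
  assert (He' : 0 < fst (Cminus d (Cplus a b))) by (unfold e in He; simpl in *; lra).
  set (a1 := Cplus a (Complex.RtoC 1)). set (b1 := Cplus b (Complex.RtoC 1)). set (d1 := Cplus d (Complex.RtoC 1)).
  assert (Hd1 : not_nonpos_int d1) by (apply nn_shift1, Hd).
  assert (He1 : 0 < fst (Cminus d1 (Cplus a1 b1))) by (unfold d1, a1, b1; unfold e in He; simpl in *; lra).
  set (k0 := Cmult (Cmult a b) (Complex.Cinv (Cmult c d))).
  assert (S1 : Cseries_cv (fun j => F32_term a b (Cadd c (RtoC 1)) d c (S j))
      (Cplus (Cminus (F2 a b d) (Complex.RtoC 1)) (Cmult k0 (F2 a1 b1 d1)))).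
  { apply (Cseries_ext (fun j => Cplus (T2 a b d (S j)) (Cmult k0 (T2 a1 b1 d1 j)))).
    - intro j. symmetry. apply F32_S; assumption.
    - apply Cseries_plus; [apply F2_sub1; assumption|]. apply Cseries_scal, F2_cv; assumption. }
  apply Cseries_shift in S1. rewrite F32_0 in S1.
  eapply Cseries_ext; [intro; reflexivity|].
  replace (Complex.Cdiv _ c) with (Cplus (Complex.RtoC 1) (Cplus (Cminus (F2 a b d) (Complex.RtoC 1)) (Cmult k0 (F2 a1 b1 d1)))); [exact S1|].
  assert (G1 := gauss a b d Hd He').
  assert (G2 := gauss a1 b1 d1 Hd1 He1).
  assert (Ed1 : Cminus d1 (Cplus a1 b1) = e) by (unfold d1, a1, b1, e; ring).
  assert (Ea : Cminus d1 a1 = Cminus d a) by (unfold d1, a1; ring).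
  assert (Eb : Cminus d1 b1 = Cminus d b) by (unfold d1, b1; ring).
  rewrite Ed1, Ea, Eb in G2.
  assert (R1 := rGamma_rec d). fold d1 in R1.
  assert (R2 := rGamma_rec e).
  assert (Ee : Cplus e (Complex.RtoC 1) = Cminus d (Cplus a b)) by (unfold e; ring).
  rewrite Ee in R2.
  assert (Nd : rGamma d <> Complex.RtoC 0) by (apply rGamma_ne0, Hd).
  assert (Ne : rGamma e <> Complex.RtoC 0) by (apply rGamma_ne0, nn_pos, He).
  assert (e0 : e <> Complex.RtoC 0) by (apply c_ne0, nn_pos, He).
  assert (C0 := c_ne0 c Hc). assert (D0 := c_ne0 d Hd).
  set (g1 := rGamma d1) in *. set (h := rGamma (Cminus d (Cplus a b))) in *.
  set (ra := rGamma (Cminus d a)) in *. set (rb := rGamma (Cminus d b)) in *.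
  set (F := F2 a b d) in *. set (F' := F2 a1 b1 d1) in *.
  rewrite R1 in G1, Nd |- *. rewrite R2 in Ne, G2 |- *.
  assert (g10 : g1 <> Complex.RtoC 0) by (intro Z; apply Nd; rewrite Z; cnorm; ring).
  assert (h0 : h <> Complex.RtoC 0) by (intro Z; apply Ne; rewrite Z; cnorm; ring).
  assert (FF : Cmult F' e = Cmult F d).
  { apply (Cmult_cancel_r _ _ (Cmult g1 h)); [apply Cmult_neq_0; assumption|].
    transitivity (Cmult (Cmult F' g1) (Cmult e h)); [ring|]. rewrite G2, <- G1. cnorm. ring. }
  assert (F'E : F' = Cmult (Cmult F d) (Complex.Cinv e)).
  { rewrite <- FF. cnorm. field. exact e0. }
  rewrite F'E. symmetry.
  transitivity (Cmult (Cmult (Cplus (Cmult c e) (Cmult a b))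
     (Complex.Cinv (Cmult (Cmult c (Cmult d g1)) (Cmult e h)))) (Cmult ra rb)).
  { unfold Complex.Cdiv. cnorm. field. repeat split; assumption. }
  rewrite <- G1. unfold k0. cnorm.
  field. repeat split; assumption.
Qed.

Theorem mainTheorem14 (k : nat) (a b c : Cplx)
  (hc : not_nonpos_int c)
  (hb1 : not_nonpos_int (Cadd (Csub (Cadd (RtoC 1) (Cmul (RtoC 2) c)) b) (RtoC (INR k))))
  (hre : 0 < Re (Cadd (Csub (Csub (Cmul (RtoC 2) c) a) (Cmul (RtoC 2) b)) (RtoC (INR k)))) :
  let two_c := Cmul (RtoC 2) c in
  let K := RtoC (INR k) in
  Cseries_cv
    (F32_term a b (Cadd c (RtoC 1))
              (Cadd (Csub (Cadd (RtoC 1) two_c) b) K) c)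
    (Cdiv
      (Cmul (Cmul (Cmul (Cmul
         (Cadd (Cmul (Csub a two_c) (Csub b c)) (Cmul K c))
         (Gamma (Cadd (Cadd (Csub two_c b) K) (RtoC 1))))
         (Gamma (Cadd (Csub (Csub two_c a) (Cmul (RtoC 2) b)) K)))
         (rGamma (Cadd (Cadd (Csub two_c (Cmul (RtoC 2) b)) K) (RtoC 1))))
         (rGamma (Cadd (Csub (Csub two_c a) b) (Cadd K (RtoC 1)))))
      c).
Proof.
  intros two_c K.
  set (d := Cadd (Csub (Cadd (RtoC 1) two_c) b) K).
  assert (He : 0 < fst (Cminus (Cminus d (Cplus a b)) (Complex.RtoC 1))).
  { unfold d, two_c, K. unfold Re in hre. simpl in *. lra. }
  assert (M := main_gen a b c d hc hb1 He).
  unfold Gamma.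
  assert (E1 : Cadd (Cadd (Csub two_c b) K) (RtoC 1) = d) by (unfold d; cnorm; ring).
  assert (E2 : Cadd (Csub (Csub two_c a) (Cmul (RtoC 2) b)) K = Cminus (Cminus d (Cplus a b)) (Complex.RtoC 1))
    by (unfold d; cnorm; ring).
  assert (E3 : Cadd (Cadd (Csub two_c (Cmul (RtoC 2) b)) K) (RtoC 1) = Cminus d b) by (unfold d; cnorm; ring).
  assert (E4 : Cadd (Csub (Csub two_c a) b) (Cadd K (RtoC 1)) = Cminus d a) by (unfold d; cnorm; ring).
  assert (E5 : Cadd (Cmul (Csub a two_c) (Csub b c)) (Cmul K c) =
     Cplus (Cmult c (Cminus (Cminus d (Cplus a b)) (Complex.RtoC 1))) (Cmult a b)) by (unfold d, two_c; cnorm; ring).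
  rewrite E1, E2, E3, E4, E5.
  exact M.
Qed.
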